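(* Let $a>0$, $y_1\in\mathbb{R}$, $\alpha\in(0,\frac{\pi}{2})$ and let $f:\Omega\to\mathbb{C}$ be holomorphic on an open set $\Omega\subseteq\mathbb{C}$ containing $S^+_\alpha$. Then: (i) If $|f(z)|\le Ae^{B|z|}$ for all $z\in S^+_\alpha$ and some $A,B\ge0$, then for every $y_0\in\mathbb{R}$ $$\lim_{\varepsilon\to0^+}\int_0^\infty e^{-\varepsilon(y-y_0)^2}e^{ia(y-y_1)^2}f(y)\,dy=e^{i\alpha}\int_0^\infty e^{ia(ye^{i\alpha}-y_1)^2}f(ye^{i\alpha})\,dy,$$ where both integrands are absolutely integrable on $(0,\infty)$. (ii) If $|f(z)|\le Ae^{B\,\mathrm{Im}(z)}$ for all $z\in S^+_\alpha$ and some $A,B\ge0$, then $$\lim_{R\to\infty}\int_0^R e^{ia(y-y_1)^2}f(y)\,dy=e^{i\alpha}\int_0^\infty e^{ia(ye^{i\alpha}-y_1)^2}f(ye^{i\alpha})\,dy,$$ where the integrand on the right is absolutely integrable on $(0,\infty)$ and the one on the left is absolutely integrable on $(0,R)$ for each $R>0$.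
   Context: For $\alpha\in(0,\frac{\pi}{2})$, $S^+_\alpha:=\{z\in\mathbb{C}: z=0 \text{ or } 0\le \mathrm{Arg}(z)\le\alpha\}$ (closed sector). *)

(* Defs.v *)
From Stdlib Require Import Reals.
From Coquelicot Require Import Coquelicot.
Open Scope R_scope.

Definition cexp (z : C) : C :=
  (exp (Re z) * cos (Im z), exp (Re z) * sin (Im z))%R.

(* closed sector S^+_alpha = {0} ∪ {z : 0 <= Arg z <= alpha}, in polar form *)
Definition sector (alpha : R) (z : C) : Prop :=
  exists r theta : R, 0 <= r /\ 0 <= theta <= alpha /\
    z = Cmult (RtoC r) (cexp ((0:R), theta)).

Definition holomorphic_on (Omega : C -> Prop) (f : C -> C) : Prop :=
  forall z : C, Omega z -> ex_derive (K := C_AbsRing) (V := C_NormedModule) f z.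

Definition abs_integrable_0_inf (g : R -> C) : Prop :=
  ex_RInt_gen (fun y => Cmod (g y)) (at_point 0) (Rbar_locally p_infty).

Definition is_integral_0_inf (g : R -> C) (L : C) : Prop :=
  @is_RInt_gen C_R_NormedModule g (at_point 0) (Rbar_locally p_infty) L.

Definition is_integral_0_R (g : R -> C) (R0 : R) (L : C) : Prop :=
  @is_RInt C_R_NormedModule g 0 R0 L.

Definition abs_integrable_0_R (g : R -> C) (R0 : R) : Prop :=
  ex_RInt (fun y => Cmod (g y)) 0 R0.

Definition rotated_integrand (a y1 alpha : R) (f : C -> C) (y : R) : C :=
  let w := Cmult (RtoC y) (cexp ((0:R), alpha)) in
  Cmult (cexp (Cmult ((0:R), a) (Cmult (Cminus w (RtoC y1)) (Cminus w (RtoC y1))))) (f w).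

Definition real_integrand (a y1 : R) (f : C -> C) (y : R) : C :=
  Cmult (cexp ((0:R), a * (y - y1)^2)) (f (RtoC y)).

(* Main.v *)
Require Import Defs.
From Stdlib Require Import Reals Lra Psatz.
From Coquelicot Require Import Coquelicot.
Open Scope R_scope.

Lemma normCR (x : C_R_NormedModule) : norm x = Cmod x.
Proof.
  destruct x as [u v]. unfold norm; simpl. unfold prod_norm, Cmod; simpl.
  f_equal. change (norm u) with (Rabs u). change (norm v) with (Rabs v).
  rewrite !Rmult_1_r, <- !Rabs_mult, !Rabs_right; try reflexivity; nra.
Qed.

Lemma normC (x : C_NormedModule) : norm x = Cmod x.
Proof. reflexivity. Qed.

Lemma Cmod_triangle' (x y : C) : Cmod (x + y) <= Cmod x + Cmod y.
Proof. apply Cmod_triangle. Qed.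

Lemma Cmod_le_sum (x : C) : Cmod x <= Rabs (Re x) + Rabs (Im x).
Proof.
  destruct x as [u v]. unfold Cmod; simpl.
  pose proof (Rabs_pos u); pose proof (Rabs_pos v).
  rewrite <- (sqrt_Rsqr (Rabs u + Rabs v)) by lra.
  apply sqrt_le_1_alt. unfold Rsqr.
  assert (Rabs u * Rabs u = u * u) by (rewrite <- Rabs_mult; apply Rabs_right; nra).
  assert (Rabs v * Rabs v = v * v) by (rewrite <- Rabs_mult; apply Rabs_right; nra).
  nra.
Qed.

Definition ccont (h : R -> C) (x : R) : Prop :=
  forall eps, 0 < eps -> exists delta, 0 < delta /\
    forall y, Rabs (y - x) < delta -> Cmod (h y - h x) < eps.

Lemma rcont_of_derive (k : R -> R) x : ex_derive k x ->
  forall eps, 0 < eps -> exists delta, 0 < delta /\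
    forall y, Rabs (y - x) < delta -> Rabs (k y - k x) < eps.
Proof.
  intros Hd eps He.
  pose proof (ex_derive_continuous k x Hd) as Hc.
  assert (Hl : locally (k x) (fun z => Rabs (z - k x) < eps)).
  { exists (mkposreal eps He). intros z Hz. exact Hz. }
  destruct (Hc _ Hl) as [d Hd']. exists d. split. apply cond_pos.
  intros y Hy. apply Hd'. exact Hy.
Qed.

Lemma ccont_of_derive (h : R -> C) x :
  ex_derive (fun y => fst (h y)) x -> ex_derive (fun y => snd (h y)) x -> ccont h x.
Proof.
  intros H1 H2 eps He.
  destruct (rcont_of_derive _ _ H1 (eps/2)) as [d1 [Hd1 P1]]; [lra|].
  destruct (rcont_of_derive _ _ H2 (eps/2)) as [d2 [Hd2 P2]]; [lra|].
  exists (Rmin d1 d2). split. apply Rmin_pos; auto.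
  intros y Hy. eapply Rle_lt_trans. apply Cmod_le_sum.
  assert (Rabs (y - x) < d1) by (eapply Rlt_le_trans; [exact Hy| apply Rmin_l]).
  assert (Rabs (y - x) < d2) by (eapply Rlt_le_trans; [exact Hy| apply Rmin_r]).
  specialize (P1 y H). specialize (P2 y H0).
  destruct (h y) as [a1 b1], (h x) as [a2 b2]; simpl in *. unfold Cminus, Cplus, Copp in *; simpl in *. replace (a1 + - a2) with (a1 - a2) by ring. replace (b1 + - b2) with (b1 - b2) by ring. lra.
Qed.

Lemma ccont_plus h1 h2 x : ccont h1 x -> ccont h2 x -> ccont (fun y => (h1 y + h2 y)%C) x.
Proof.
  intros H1 H2 eps He.
  destruct (H1 (eps/2)) as [d1 [Hd1 P1]]; [lra|].
  destruct (H2 (eps/2)) as [d2 [Hd2 P2]]; [lra|].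
  exists (Rmin d1 d2). split. apply Rmin_pos; auto.
  intros y Hy.
  assert (Rabs (y - x) < d1) by (eapply Rlt_le_trans; [exact Hy| apply Rmin_l]).
  assert (Rabs (y - x) < d2) by (eapply Rlt_le_trans; [exact Hy| apply Rmin_r]).
  specialize (P1 y H). specialize (P2 y H0).
  replace (h1 y + h2 y - (h1 x + h2 x))%C with ((h1 y - h1 x) + (h2 y - h2 x))%C by ring.
  eapply Rle_lt_trans. apply Cmod_triangle. lra.
Qed.

Lemma ccont_mult h1 h2 x : ccont h1 x -> ccont h2 x -> ccont (fun y => (h1 y * h2 y)%C) x.
Proof.
  intros H1 H2 eps He.
  set (M1 := Cmod (h1 x)). set (M2 := Cmod (h2 x)).
  assert (HM1 : 0 <= M1) by apply Cmod_ge_0. assert (HM2 : 0 <= M2) by apply Cmod_ge_0.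
  set (e := Rmin 1 (eps / (1 + M1 + M2 + 1))).
  assert (He0 : 0 < e). { apply Rmin_pos. lra. apply Rdiv_lt_0_compat; lra. }
  assert (He1 : e <= 1) by apply Rmin_l.
  assert (He2 : e * (1 + M1 + M2 + 1) <= eps).
  { assert (e <= eps / (1 + M1 + M2 + 1)) by apply Rmin_r.
    apply Rmult_le_compat_r with (r := 1 + M1 + M2 + 1) in H; [|lra].
    field_simplify in H; lra. }
  destruct (H1 e He0) as [d1 [Hd1 P1]].
  destruct (H2 e He0) as [d2 [Hd2 P2]].
  exists (Rmin d1 d2). split. apply Rmin_pos; auto.
  intros y Hy.
  assert (Rabs (y - x) < d1) by (eapply Rlt_le_trans; [exact Hy| apply Rmin_l]).
  assert (Rabs (y - x) < d2) by (eapply Rlt_le_trans; [exact Hy| apply Rmin_r]).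
  specialize (P1 y H). specialize (P2 y H0).
  replace (h1 y * h2 y - h1 x * h2 x)%C with
    ((h1 y - h1 x) * (h2 y - h2 x) + (h1 y - h1 x) * h2 x + h1 x * (h2 y - h2 x))%C by ring.
  eapply Rle_lt_trans. apply Cmod_triangle.
  eapply Rle_lt_trans. apply Rplus_le_compat_r. apply Cmod_triangle.
  rewrite !Cmod_mult. fold M1 M2.
  assert (0 <= Cmod (h1 y - h1 x)) by apply Cmod_ge_0.
  assert (0 <= Cmod (h2 y - h2 x)) by apply Cmod_ge_0.
  assert (Cmod (h1 y - h1 x) * Cmod (h2 y - h2 x) <= e * e) by (apply Rmult_le_compat; lra).
  assert (Cmod (h1 y - h1 x) * M2 <= e * M2) by (apply Rmult_le_compat_r; lra).
  assert (M1 * Cmod (h2 y - h2 x) <= M1 * e) by (apply Rmult_le_compat_l; lra).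
  assert (e * e <= e) by nra.
  assert (e * e + e * M2 + M1 * e < e * (1 + M1 + M2 + 1)) by nra.
  lra.
Qed.

Lemma ccont_const (c : C) x : ccont (fun _ => c) x.
Proof.
  intros eps He. exists 1. split. lra. intros y _.
  replace (c - c)%C with (RtoC 0) by ring. rewrite Cmod_0. exact He.
Qed.

Definition Ccont (g : C -> C) (z : C) : Prop :=
  forall eps, 0 < eps -> exists delta, 0 < delta /\
    forall w, Cmod (w - z) < delta -> Cmod (g w - g z) < eps.

Lemma ccont_comp (g : C -> C) (h : R -> C) x :
  Ccont g (h x) -> ccont h x -> ccont (fun y => g (h y)) x.
Proof.
  intros Hg Hh eps He.
  destruct (Hg eps He) as [d [Hd P]].
  destruct (Hh d Hd) as [d' [Hd' P']].
  exists d'. split; [exact Hd'|]. intros y Hy. apply P. apply P'. exact Hy.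
Qed.

Lemma ccont_continuous (h : R -> C) x :
  ccont h x -> @continuous R_UniformSpace C_R_CompleteNormedModule h x.
Proof.
  intros Hh P [eps HP].
  destruct (Hh eps (cond_pos eps)) as [d [Hd Q]].
  exists (mkposreal d Hd). intros y Hy. apply HP.
  apply C_NormedModule_mixin_compat1. apply Q. exact Hy.
Qed.

Lemma ex_RInt_ccont (h : R -> C) a b :
  (forall z, Rmin a b <= z <= Rmax a b -> ccont h z) ->
  @ex_RInt C_R_CompleteNormedModule h a b.
Proof.
  intros H. apply ex_RInt_continuous. intros z Hz. apply ccont_continuous. auto.
Qed.

Lemma ex_RInt_Cmod (h : R -> C) a b :
  (forall z, Rmin a b <= z <= Rmax a b -> ccont h z) ->
  ex_RInt (fun y => Cmod (h y)) a b.
Proof.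
  intros H. apply (@ex_RInt_continuous R_CompleteNormedModule).
  intros z Hz P [eps HP].
  destruct (H z Hz eps (cond_pos eps)) as [d [Hd Q]].
  exists (mkposreal d Hd). intros y Hy. apply HP.
  change (Rabs (Cmod (h y) - Cmod (h z)) < eps).
  eapply Rle_lt_trans; [|apply (Q y Hy)].
  apply Rabs_le. split.
  - pose proof (Cmod_triangle (h y - h z) (h z)).
    replace (h y - h z + h z)%C with (h y) in H0 by ring.
    pose proof (Cmod_triangle (h z - h y) (h y)).
    replace (h z - h y + h y)%C with (h z) in H1 by ring.
    assert (Cmod (h z - h y) = Cmod (h y - h z)).
    { rewrite <- Cmod_opp. f_equal. ring. }
    lra.
  - pose proof (Cmod_triangle (h y - h z) (h z)).
    replace (h y - h z + h z)%C with (h y) in H0 by ring. lra.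
Qed.

Lemma exp_le x y : x <= y -> exp x <= exp y.
Proof.
  intros H. destruct (Req_dec x y). subst; lra. apply Rlt_le, exp_increasing. lra.
Qed.

Lemma mvt01 (f df : R -> R) :
  (forall s, 0 <= s <= 1 -> is_derive f s (df s)) ->
  exists c, 0 <= c <= 1 /\ f 1 - f 0 = df c.
Proof.
  intros H. destruct (MVT_cor2 f df 0 1) as [c [Hc1 Hc2]]. lra.
  intros c Hc. apply is_derive_Reals. apply H. exact Hc.
  exists c. split. lra. rewrite Hc1. ring.
Qed.

Definition scalC (s : R) (w : C) : C := (s * fst w, s * snd w).

Lemma Cmod_scalC s w : 0 <= s -> Cmod (scalC s w) = s * Cmod w.
Proof.
  intros Hs. unfold scalC. replace (s * fst w, s * snd w) with (RtoC s * w)%C.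
  rewrite Cmod_mult, Cmod_R, Rabs_right; lra.
  destruct w; unfold Cmult, RtoC; simpl. f_equal; ring.
Qed.

Lemma Cmod_cexp z : Cmod (cexp z) = exp (fst z).
Proof.
  destruct z as [p q]. unfold cexp, Cmod; simpl.
  replace (exp p * cos q * (exp p * cos q * 1) + exp p * sin q * (exp p * sin q * 1))
    with (exp p * exp p * ((sin q)^2 + (cos q)^2)) by ring.
  rewrite <- !Rsqr_pow2, sin2_cos2, Rmult_1_r. rewrite sqrt_square. reflexivity.
  apply Rlt_le, exp_pos.
Qed.

Lemma cexp_add z1 z2 : cexp (z1 + z2)%C = (cexp z1 * cexp z2)%C.
Proof.
  destruct z1 as [p1 q1], z2 as [p2 q2]. unfold cexp, Cmult, Cplus; simpl.
  rewrite exp_plus, cos_plus, sin_plus. f_equal; ring.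
Qed.

Lemma cexp_ray (w k : C) :
  (exists c, 0 <= c <= 1 /\ fst (cexp w - 1 - k * w)%C = fst (w * (cexp (scalC c w) - k))%C) /\
  (exists c, 0 <= c <= 1 /\ snd (cexp w - 1 - k * w)%C = snd (w * (cexp (scalC c w) - k))%C).
Proof.
  destruct w as [p q], k as [kr ki]. split.
  - destruct (mvt01 (fun s => exp (s*p) * cos (s*q) - s * (kr*p - ki*q))
       (fun s => p * (exp (s*p) * cos (s*q)) - q * (exp (s*p) * sin (s*q)) - (kr*p - ki*q)))
      as [c [Hc E]].
    { intros s _. auto_derive. auto. ring. }
    exists c. split. auto. unfold cexp, scalC, Cmult, Cminus, Cplus, Copp, RtoC in *; simpl in *.
    rewrite !Rmult_0_l, !Rmult_1_l, exp_0, cos_0 in E. nra.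
  - destruct (mvt01 (fun s => exp (s*p) * sin (s*q) - s * (kr*q + ki*p))
       (fun s => p * (exp (s*p) * sin (s*q)) + q * (exp (s*p) * cos (s*q)) - (kr*q + ki*p)))
      as [c [Hc E]].
    { intros s _. auto_derive. auto. ring. }
    exists c. split. auto. unfold cexp, scalC, Cmult, Cminus, Cplus, Copp, RtoC in *; simpl in *.
    rewrite !Rmult_0_l, !Rmult_1_l, exp_0, sin_0 in E. nra.
Qed.

Lemma im_le_Cmod (w : C) : Rabs (snd w) <= Cmod w.
Proof. eapply Rle_trans; [apply Rmax_r | apply Rmax_Cmod]. Qed.

Lemma cexp_ray_bound (w k : C) M :
  (forall s, 0 <= s <= 1 -> Cmod (cexp (scalC s w) - k) <= M) ->
  Cmod (cexp w - 1 - k * w)%C <= 2 * Cmod w * M.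
Proof.
  intros HM. destruct (cexp_ray w k) as [[c1 [Hc1 E1]] [c2 [Hc2 E2]]].
  eapply Rle_trans. apply Cmod_le_sum. unfold Re, Im. rewrite E1, E2.
  assert (Rabs (fst (w * (cexp (scalC c1 w) - k))%C) <= Cmod w * M).
  { eapply Rle_trans. apply re_le_Cmod. rewrite Cmod_mult.
    apply Rmult_le_compat_l. apply Cmod_ge_0. auto. }
  assert (Rabs (snd (w * (cexp (scalC c2 w) - k))%C) <= Cmod w * M).
  { eapply Rle_trans. apply im_le_Cmod. rewrite Cmod_mult.
    apply Rmult_le_compat_l. apply Cmod_ge_0. auto. }
  lra.
Qed.

Lemma fst_le_Cmod (w : C) : fst w <= Cmod w.
Proof. eapply Rle_trans. apply Rle_abs. apply re_le_Cmod. Qed.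

Lemma cexp_m1 w : Cmod (cexp w - 1)%C <= 2 * Cmod w * exp (Cmod w).
Proof.
  replace (cexp w - 1)%C with (cexp w - 1 - 0 * w)%C by ring.
  apply cexp_ray_bound. intros s Hs.
  replace (cexp (scalC s w) - 0)%C with (cexp (scalC s w)) by ring.
  rewrite Cmod_cexp. apply exp_le. eapply Rle_trans. apply (fst_le_Cmod (scalC s w)).
  rewrite Cmod_scalC by lra. pose proof (Cmod_ge_0 w). nra.
Qed.

Lemma cexp_m1_lin w : Cmod (cexp w - 1 - w)%C <= 4 * Cmod w ^ 2 * exp (Cmod w).
Proof.
  replace (cexp w - 1 - w)%C with (cexp w - 1 - 1 * w)%C by ring.
  eapply Rle_trans. apply (cexp_ray_bound w 1 (2 * Cmod w * exp (Cmod w))).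
  - intros s Hs. eapply Rle_trans. apply cexp_m1. rewrite Cmod_scalC by lra.
    pose proof (Cmod_ge_0 w). assert (exp (s * Cmod w) <= exp (Cmod w)) by (apply exp_le; nra).
    pose proof (exp_pos (s * Cmod w)).
    assert (s * Cmod w <= Cmod w) by nra.
    apply Rmult_le_compat; nra.
  - pose proof (Cmod_ge_0 w). pose proof (exp_pos (Cmod w)). nra.
Qed.

Definition Cdiff (g : C -> C) (z l : C) : Prop :=
  forall eps, 0 < eps -> exists delta, 0 < delta /\
    forall w, Cmod (w - z) < delta -> Cmod (g w - g z - l * (w - z)) <= eps * Cmod (w - z).

Lemma Cdiff_ex_derive g z :
  ex_derive (K := C_AbsRing) (V := C_NormedModule) g z -> exists l, Cdiff g z l.
Proof.
  intros [l [_ Hd]]. exists l. intros eps He.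
  specialize (Hd z (fun P H => H) (mkposreal eps He)).
  destruct Hd as [d Hd]. exists d. split. apply cond_pos.
  intros w Hw. specialize (Hd w Hw). simpl in Hd.
  replace (l * (w - z))%C with ((w - z) * l)%C by ring. exact Hd.
Qed.

Lemma Cdiff_bound g z l : Cdiff g z l -> exists d, 0 < d /\
  forall w, Cmod (w - z) < d -> Cmod (g w - g z) <= (Cmod l + 1) * Cmod (w - z).
Proof.
  intros H. destruct (H 1 Rlt_0_1) as [d [Hd P]]. exists d. split; auto.
  intros w Hw. specialize (P w Hw).
  replace (g w - g z)%C with ((g w - g z - l * (w - z)) + l * (w - z))%C by ring.
  eapply Rle_trans. apply Cmod_triangle. rewrite Cmod_mult. lra.
Qed.

Lemma Cdiff_Ccont g z l : Cdiff g z l -> Ccont g z.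
Proof.
  intros H eps He. destruct (Cdiff_bound g z l H) as [d [Hd P]].
  pose proof (Cmod_ge_0 l).
  exists (Rmin d (eps / (Cmod l + 2))). split.
  apply Rmin_pos; auto. apply Rdiv_lt_0_compat; lra.
  intros w Hw.
  assert (Cmod (w - z) < d) by (eapply Rlt_le_trans; [exact Hw|apply Rmin_l]).
  assert (Cmod (w - z) < eps / (Cmod l + 2)) by (eapply Rlt_le_trans; [exact Hw|apply Rmin_r]).
  specialize (P w H1).
  apply Rmult_lt_compat_l with (r := Cmod l + 2) in H2; [|lra].
  field_simplify in H2; [|lra]. pose proof (Cmod_ge_0 (w - z)). nra.
Qed.

Lemma Cdiff_plus g1 g2 z l1 l2 : Cdiff g1 z l1 -> Cdiff g2 z l2 ->
  Cdiff (fun w => g1 w + g2 w)%C z (l1 + l2)%C.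
Proof.
  intros H1 H2 eps He.
  destruct (H1 (eps/2)) as [d1 [Hd1 P1]]; [lra|].
  destruct (H2 (eps/2)) as [d2 [Hd2 P2]]; [lra|].
  exists (Rmin d1 d2). split. apply Rmin_pos; auto.
  intros w Hw.
  assert (Cmod (w - z) < d1) by (eapply Rlt_le_trans; [exact Hw|apply Rmin_l]).
  assert (Cmod (w - z) < d2) by (eapply Rlt_le_trans; [exact Hw|apply Rmin_r]).
  specialize (P1 w H). specialize (P2 w H0).
  replace (g1 w + g2 w - (g1 z + g2 z) - (l1 + l2) * (w - z))%C with
    ((g1 w - g1 z - l1 * (w - z)) + (g2 w - g2 z - l2 * (w - z)))%C by ring.
  eapply Rle_trans. apply Cmod_triangle. lra.
Qed.

Lemma Cdiff_mult g1 g2 z l1 l2 : Cdiff g1 z l1 -> Cdiff g2 z l2 ->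
  Cdiff (fun w => g1 w * g2 w)%C z (l1 * g2 z + g1 z * l2)%C.
Proof.
  intros H1 H2 eps He.
  set (K := Cmod (g1 z) + Cmod (g2 z) + Cmod l1 + 2).
  assert (HK : 2 <= K) by (unfold K; pose proof (Cmod_ge_0 (g1 z)); pose proof (Cmod_ge_0 (g2 z)); pose proof (Cmod_ge_0 l1); lra).
  set (e := Rmin 1 (eps / K)).
  assert (He0 : 0 < e) by (apply Rmin_pos; [lra| apply Rdiv_lt_0_compat; lra]).
  assert (He1 : e <= 1) by apply Rmin_l.
  assert (HeK : e * K <= eps).
  { assert (e <= eps / K) by apply Rmin_r.
    apply Rmult_le_compat_r with (r := K) in H; [|lra]. field_simplify in H; lra. }
  destruct (H1 e He0) as [d1 [Hd1 P1]].
  destruct (H2 e He0) as [d2 [Hd2 P2]].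
  destruct (Cdiff_Ccont g2 z l2 H2 e He0) as [d3 [Hd3 P3]].
  exists (Rmin d1 (Rmin d2 d3)). split. repeat apply Rmin_pos; auto.
  intros w Hw.
  assert (Cmod (w - z) < d1) by (eapply Rlt_le_trans; [exact Hw|apply Rmin_l]).
  assert (Cmod (w - z) < d2) by (eapply Rlt_le_trans; [exact Hw|eapply Rle_trans; [apply Rmin_r|apply Rmin_l]]).
  assert (Cmod (w - z) < d3) by (eapply Rlt_le_trans; [exact Hw|eapply Rle_trans; [apply Rmin_r|apply Rmin_r]]).
  specialize (P1 w H). specialize (P2 w H0). specialize (P3 w H3).
  replace (g1 w * g2 w - g1 z * g2 z - (l1 * g2 z + g1 z * l2) * (w - z))%C with
    ((g1 w - g1 z - l1 * (w - z)) * g2 w + g1 z * (g2 w - g2 z - l2 * (w - z))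
      + l1 * (w - z) * (g2 w - g2 z))%C by ring.
  eapply Rle_trans. apply Cmod_triangle.
  eapply Rle_trans. apply Rplus_le_compat_r. apply Cmod_triangle.
  rewrite !Cmod_mult.
  assert (Cmod (g2 w) <= Cmod (g2 z) + 1).
  { replace (g2 w) with ((g2 w - g2 z) + g2 z)%C by ring.
    eapply Rle_trans. apply Cmod_triangle. lra. }
  pose proof (Cmod_ge_0 (w - z)). pose proof (Cmod_ge_0 (g1 z)).
  pose proof (Cmod_ge_0 l1). pose proof (Cmod_ge_0 (g2 w)).
  pose proof (Cmod_ge_0 (g1 w - g1 z - l1 * (w - z))%C).
  pose proof (Cmod_ge_0 (g2 w - g2 z)%C).
  assert (A1 : Cmod (g1 w - g1 z - l1 * (w - z)) * Cmod (g2 w) <= e * Cmod (w - z) * (Cmod (g2 z) + 1))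
    by (apply Rmult_le_compat; lra).
  assert (A2 : Cmod (g1 z) * Cmod (g2 w - g2 z - l2 * (w - z)) <= Cmod (g1 z) * (e * Cmod (w - z)))
    by (apply Rmult_le_compat_l; lra).
  assert (A3 : Cmod l1 * Cmod (w - z) * Cmod (g2 w - g2 z) <= Cmod l1 * Cmod (w - z) * e)
    by (apply Rmult_le_compat_l; [nra|lra]).
  assert (e * Cmod (w - z) * K <= eps * Cmod (w - z)) by nra.
  unfold K in *. nra.
Qed.

Lemma Cdiff_sq (c u z : C) :
  Cdiff (fun w => c * ((w - u) * (w - u)))%C z (2 * c * (z - u))%C.
Proof.
  intros eps He. exists (eps / (Cmod c + 1)). split.
  apply Rdiv_lt_0_compat; [lra| pose proof (Cmod_ge_0 c); lra].
  intros w Hw.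
  replace (c * ((w - u) * (w - u)) - c * ((z - u) * (z - u)) - 2 * c * (z - u) * (w - z))%C
    with (c * ((w - z) * (w - z)))%C by ring.
  rewrite !Cmod_mult. pose proof (Cmod_ge_0 c). pose proof (Cmod_ge_0 (w - z)).
  apply Rmult_lt_compat_l with (r := Cmod c + 1) in Hw; [|lra].
  field_simplify in Hw; [|lra]. nra.
Qed.

Lemma Cdiff_cexp_comp q z l : Cdiff q z l -> Cdiff (fun w => cexp (q w)) z (cexp (q z) * l)%C.
Proof.
  intros H eps He.
  set (E := Cmod (cexp (q z))). assert (HE : 0 <= E) by apply Cmod_ge_0.
  set (L := Cmod l + 1). assert (HL : 1 <= L) by (unfold L; pose proof (Cmod_ge_0 l); lra).
  set (e2 := eps / (2 * (E + 1))).
  assert (He2 : 0 < e2) by (apply Rdiv_lt_0_compat; lra).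
  destruct (H e2 He2) as [d1 [Hd1 P1]].
  destruct (Cdiff_bound q z l H) as [d2 [Hd2 P2]].
  set (d3 := Rmin 1 (e2 / (12 * L))).
  assert (Hd3 : 0 < d3) by (apply Rmin_pos; [lra|apply Rdiv_lt_0_compat; lra]).
  exists (Rmin d1 (Rmin d2 (d3 / L))). split.
  repeat apply Rmin_pos; auto. apply Rdiv_lt_0_compat; lra.
  intros w Hw.
  assert (Cmod (w - z) < d1) by (eapply Rlt_le_trans; [exact Hw|apply Rmin_l]).
  assert (Cmod (w - z) < d2) by (eapply Rlt_le_trans; [exact Hw|eapply Rle_trans; [apply Rmin_r|apply Rmin_l]]).
  assert (Cmod (w - z) < d3 / L) by (eapply Rlt_le_trans; [exact Hw|eapply Rle_trans; [apply Rmin_r|apply Rmin_r]]).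
  specialize (P1 w H0). specialize (P2 w H1).
  set (d := (q w - q z)%C) in *.
  assert (Hd : Cmod d <= d3).
  { eapply Rle_trans. exact P2. fold L.
    apply Rmult_lt_compat_l with (r := L) in H2; [|lra]. field_simplify in H2; lra. }
  assert (Hd1' : Cmod d <= 1) by (eapply Rle_trans; [exact Hd| apply Rmin_l]).
  assert (Hd2' : 12 * L * Cmod d <= e2).
  { assert (d3 <= e2 / (12 * L)) by apply Rmin_r.
    assert (Cmod d <= e2 / (12 * L)) by lra.
    apply Rmult_le_compat_l with (r := 12 * L) in H4; [|lra]. field_simplify in H4; lra. }
  replace (cexp (q w) - cexp (q z) - cexp (q z) * l * (w - z))%C with
    (cexp (q z) * ((cexp d - 1 - d) + (d - l * (w - z))))%C.
  2:{ replace (q w) with (q z + d)%C by (unfold d; ring). rewrite cexp_add.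
      unfold d. ring. }
  rewrite Cmod_mult. fold E.
  assert (Q12 : Cmod (cexp d - 1 - d) <= 12 * Cmod d * Cmod d).
  { eapply Rle_trans. apply cexp_m1_lin. pose proof (Cmod_ge_0 d).
    assert (exp (Cmod d) <= 3) by (eapply Rle_trans; [apply exp_le; exact Hd1'| apply exp_le_3]).
    pose proof (exp_pos (Cmod d)). simpl. nra. }
  assert (Cmod (cexp d - 1 - d) <= e2 * Cmod (w - z)).
  { eapply Rle_trans. exact Q12. pose proof (Cmod_ge_0 d).
    assert (Cmod d <= L * Cmod (w - z)) by exact P2.
    assert (12 * Cmod d * Cmod d <= 12 * Cmod d * (L * Cmod (w - z))) by nra.
    nra. }
  assert (Cmod ((cexp d - 1 - d) + (d - l * (w - z)))%C <= 2 * e2 * Cmod (w - z)).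
  { eapply Rle_trans. apply Cmod_triangle. unfold d in *. lra. }
  assert (2 * e2 * (E + 1) = eps) by (unfold e2; field; lra).
  pose proof (Cmod_ge_0 (w - z)).
  pose proof (Cmod_ge_0 ((cexp d - 1 - d) + (d - l * (w - z)))%C).
  nra.
Qed.

Lemma lip_of_deriv (f df : R -> R) x y :
  (forall c, derivable_pt_lim f c (df c)) -> (forall c, Rabs (df c) <= 1) ->
  Rabs (f x - f y) <= Rabs (x - y).
Proof.
  intros Hd Hb. destruct (Rtotal_order x y) as [H|[H|H]].
  - destruct (MVT_cor2 f df x y H (fun c _ => Hd c)) as [c [E _]].
    replace (f x - f y) with (- (f y - f x)) by ring. rewrite Rabs_Ropp, E.
    rewrite Rabs_mult. replace (x - y) with (- (y - x)) by ring. rewrite Rabs_Ropp.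
    pose proof (Hb c). pose proof (Rabs_pos (y - x)). nra.
  - subst. replace (f y - f y) with 0 by ring. rewrite Rabs_R0. apply Rabs_pos.
  - destruct (MVT_cor2 f df y x H (fun c _ => Hd c)) as [c [E _]].
    rewrite E, Rabs_mult. pose proof (Hb c). pose proof (Rabs_pos (x - y)). nra.
Qed.

Lemma cos_lip x y : Rabs (cos x - cos y) <= Rabs (x - y).
Proof.
  apply (lip_of_deriv cos (fun c => - sin c)). intros c. apply derivable_pt_lim_cos.
  intros c. rewrite Rabs_Ropp. apply Rabs_le. apply SIN_bound.
Qed.

Lemma sin_lip x y : Rabs (sin x - sin y) <= Rabs (x - y).
Proof.
  apply (lip_of_deriv sin cos). intros c. apply derivable_pt_lim_sin.
  intros c. apply Rabs_le. apply COS_bound.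
Qed.

Definition phi (r t : R) : C := (RtoC r * cexp ((0:R), t))%C.

Lemma phi_eq r t : phi r t = (r * cos t, r * sin t).
Proof. unfold phi, cexp, RtoC, Cmult; simpl. rewrite exp_0. f_equal; ring. Qed.

Lemma Cmod_ec t : Cmod (cexp ((0:R), t)) = 1.
Proof. rewrite Cmod_cexp. simpl. apply exp_0. Qed.

Lemma phi_lip r t r' t' :
  Cmod (phi r t - phi r' t') <= Rabs (r - r') + 2 * Rabs r' * Rabs (t - t').
Proof.
  replace (phi r t - phi r' t')%C with
    (RtoC (r - r') * cexp ((0:R), t) + RtoC r' * (cexp ((0:R), t) - cexp ((0:R), t')))%C.
  2:{ unfold phi. rewrite RtoC_minus. ring. }
  eapply Rle_trans. apply Cmod_triangle. rewrite !Cmod_mult, !Cmod_R, Cmod_ec.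
  apply Rplus_le_compat. lra.
  replace (2 * Rabs r' * Rabs (t - t')) with (Rabs r' * (2 * Rabs (t - t'))) by ring. apply Rmult_le_compat_l. apply Rabs_pos.
  eapply Rle_trans. apply Cmod_le_sum. unfold cexp; simpl. rewrite exp_0, !Rmult_1_l.
  replace (cos t + - cos t') with (cos t - cos t') by ring.
  replace (sin t + - sin t') with (sin t - sin t') by ring.
  pose proof (cos_lip t t'). pose proof (sin_lip t t'). lra.
Qed.

Lemma Rmax0_lip a b : Rabs (Rmax 0 a - Rmax 0 b) <= Rabs (a - b).
Proof. unfold Rmax; repeat destruct Rle_dec; apply Rabs_le; split; try apply Rabs_le in H; unfold Rabs; destruct Rcase_abs; lra. Qed.

Lemma Rmin_lip c a b : Rabs (Rmin c a - Rmin c b) <= Rabs (a - b).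
Proof. unfold Rmin; repeat destruct Rle_dec; apply Rabs_le; split; unfold Rabs; destruct Rcase_abs; lra. Qed.

Definition ct (al t : R) := Rmax 0 (Rmin al t).

Lemma ct_lip al a b : Rabs (ct al a - ct al b) <= Rabs (a - b).
Proof. unfold ct. eapply Rle_trans. apply Rmax0_lip. apply Rmin_lip. Qed.

Lemma ct_range al t : 0 <= al -> 0 <= ct al t <= al.
Proof. intros H. unfold ct, Rmax, Rmin; repeat destruct Rle_dec; lra. Qed.

Lemma ct_id al t : 0 <= t <= al -> ct al t = t.
Proof. intros H. unfold ct, Rmax, Rmin; repeat destruct Rle_dec; lra. Qed.

Lemma Rmax0_id r : 0 <= r -> Rmax 0 r = r.
Proof. intros H. unfold Rmax; destruct Rle_dec; lra. Qed.

Definition gg (g : C -> C) (al r t : R) : C := g (phi (Rmax 0 r) (ct al t)).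

Section Cont.
Variable g : C -> C.
Variable al : R.
Hypothesis Hal : 0 <= al.
Hypothesis Hc : forall r t, 0 <= r -> 0 <= t <= al -> Ccont g (phi r t).

Lemma gg_cont_r t x : ccont (fun r => gg g al r t) x.
Proof.
  intros eps He.
  destruct (Hc (Rmax 0 x) (ct al t) (Rmax_l _ _) (ct_range al t Hal) eps He) as [d [Hd P]].
  exists d. split; auto. intros y Hy. unfold gg. apply P.
  eapply Rle_lt_trans. apply phi_lip. replace (ct al t - ct al t) with 0 by ring.
  rewrite Rabs_R0, Rmult_0_r, Rplus_0_r. eapply Rle_lt_trans. apply Rmax0_lip. exact Hy.
Qed.

Lemma gg_cont_t r x : ccont (fun t => gg g al r t) x.
Proof.
  intros eps He.
  destruct (Hc (Rmax 0 r) (ct al x) (Rmax_l _ _) (ct_range al x Hal) eps He) as [d [Hd P]].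
  set (m := Rabs (Rmax 0 r)).
  assert (Hm : 0 <= m) by apply Rabs_pos.
  exists (d / (2 * m + 1)). split. apply Rdiv_lt_0_compat; lra.
  intros y Hy. unfold gg. apply P.
  eapply Rle_lt_trans. apply phi_lip. replace (Rmax 0 r - Rmax 0 r) with 0 by ring.
  rewrite Rabs_R0, Rplus_0_l. fold m.
  pose proof (ct_lip al y x).
  apply Rmult_lt_compat_l with (r := 2 * m + 1) in Hy; [|lra].
  field_simplify in Hy; [|lra]. pose proof (Rabs_pos (y - x)). pose proof (Rabs_pos (ct al y - ct al x)). nra.
Qed.

End Cont.

Definition ec (t : R) : C := cexp ((0:R), t).
Definition dphit (r t : R) : C := ((0, r) * ec t)%C.

Lemma ec_cont t : ccont ec t.
Proof. apply ccont_of_derive; unfold ec, cexp; simpl; auto_derive; auto. Qed.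

Lemma dphit_cont r t : ccont (dphit r) t.
Proof. apply ccont_of_derive; unfold dphit, ec, cexp, Cmult; simpl; auto_derive; auto. Qed.

Record rect := mkR { r1 : R; r2 : R; t1 : R; t2 : R }.

Section Gour.
Variable g : C -> C.
Variable al : R.
Hypothesis Hal : 0 <= al.
Hypothesis Hc : forall r t, 0 <= r -> 0 <= t <= al -> Ccont g (phi r t).

Definition F1 (t r : R) : C := (gg g al r t * ec t)%C.
Definition F2 (r t : R) : C := (gg g al r t * dphit r t)%C.

Lemma F1_cont t x : ccont (F1 t) x.
Proof. apply ccont_mult. apply gg_cont_r; auto. apply ccont_const. Qed.
Lemma F2_cont r x : ccont (F2 r) x.
Proof. apply ccont_mult. apply gg_cont_t; auto. apply dphit_cont. Qed.

Lemma F1_ex t a b : @ex_RInt C_R_CompleteNormedModule (F1 t) a b.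
Proof. apply ex_RInt_ccont. intros; apply F1_cont. Qed.
Lemma F2_ex r a b : @ex_RInt C_R_CompleteNormedModule (F2 r) a b.
Proof. apply ex_RInt_ccont. intros; apply F2_cont. Qed.

Definition I1 t a b : C := @RInt C_R_CompleteNormedModule (F1 t) a b.
Definition I2 r a b : C := @RInt C_R_CompleteNormedModule (F2 r) a b.

Definition Bnd (Q : rect) : C :=
  (I1 (t1 Q) (r1 Q) (r2 Q) + I2 (r2 Q) (t1 Q) (t2 Q) - I1 (t2 Q) (r1 Q) (r2 Q) - I2 (r1 Q) (t1 Q) (t2 Q))%C.

Lemma I1_chasles t a b c : (I1 t a b + I1 t b c)%C = I1 t a c.
Proof. unfold I1. apply (RInt_Chasles (V := C_R_CompleteNormedModule)); apply F1_ex. Qed.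
Lemma I2_chasles r a b c : (I2 r a b + I2 r b c)%C = I2 r a c.
Proof. unfold I2. apply (RInt_Chasles (V := C_R_CompleteNormedModule)); apply F2_ex. Qed.

Definition ch1 Q := mkR (r1 Q) ((r1 Q + r2 Q)/2) (t1 Q) ((t1 Q + t2 Q)/2).
Definition ch2 Q := mkR ((r1 Q + r2 Q)/2) (r2 Q) (t1 Q) ((t1 Q + t2 Q)/2).
Definition ch3 Q := mkR (r1 Q) ((r1 Q + r2 Q)/2) ((t1 Q + t2 Q)/2) (t2 Q).
Definition ch4 Q := mkR ((r1 Q + r2 Q)/2) (r2 Q) ((t1 Q + t2 Q)/2) (t2 Q).

Lemma Bnd_split Q : Bnd Q = (Bnd (ch1 Q) + Bnd (ch2 Q) + Bnd (ch3 Q) + Bnd (ch4 Q))%C.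
Proof.
  destruct Q as [a b c d]. unfold Bnd, ch1, ch2, ch3, ch4; simpl.
  set (m := (a + b) / 2). set (n := (c + d) / 2).
  rewrite <- (I1_chasles c a m b), <- (I1_chasles d a m b),
          <- (I2_chasles b c n d), <- (I2_chasles a c n d).
  ring.
Qed.

Definition nB Q := Cmod (Bnd Q).

Definition next (Q : rect) : rect :=
  if Rle_dec (nB Q / 4) (nB (ch1 Q)) then ch1 Q else
  if Rle_dec (nB Q / 4) (nB (ch2 Q)) then ch2 Q else
  if Rle_dec (nB Q / 4) (nB (ch3 Q)) then ch3 Q else ch4 Q.

Lemma next_big Q : nB Q / 4 <= nB (next Q).
Proof.
  unfold next. destruct Rle_dec as [H|H]; auto.
  destruct Rle_dec as [H2|H2]; auto.
  destruct Rle_dec as [H3|H3]; auto.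
  assert (nB Q <= nB (ch1 Q) + nB (ch2 Q) + nB (ch3 Q) + nB (ch4 Q)).
  { unfold nB at 1. rewrite Bnd_split. unfold nB.
    eapply Rle_trans. apply Cmod_triangle.
    eapply Rle_trans. apply Rplus_le_compat_r. apply Cmod_triangle.
    eapply Rle_trans. apply Rplus_le_compat_r. apply Rplus_le_compat_r. apply Cmod_triangle.
    lra. }
  lra.
Qed.

Lemma next_geom Q : r1 Q <= r2 Q -> t1 Q <= t2 Q ->
  r1 Q <= r1 (next Q) /\ r2 (next Q) <= r2 Q /\ r2 (next Q) - r1 (next Q) = (r2 Q - r1 Q) / 2 /\
  t1 Q <= t1 (next Q) /\ t2 (next Q) <= t2 Q /\ t2 (next Q) - t1 (next Q) = (t2 Q - t1 Q) / 2.
Proof.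
  intros H1 H2. unfold next.
  repeat destruct Rle_dec; unfold ch1, ch2, ch3, ch4; simpl; repeat split; lra.
Qed.

End Gour.

Lemma ftc_pair (u v du dv : R -> R) a b :
  (forall s, is_derive u s (du s)) -> (forall s, is_derive v s (dv s)) ->
  (forall s, ex_derive du s) -> (forall s, ex_derive dv s) ->
  @is_RInt C_R_NormedModule (fun s => (du s, dv s)) a b ((u b - u a, v b - v a)).
Proof.
  intros Hu Hv Hdu Hdv.
  apply (is_RInt_fct_extend_pair (U := R_NormedModule) (V := R_NormedModule)); simpl.
  - apply (is_RInt_derive (V := R_CompleteNormedModule) u du). intros; auto.
    intros x _; apply (ex_derive_continuous (K:=R_AbsRing) (V:=R_NormedModule)); auto.
  - apply (is_RInt_derive (V := R_CompleteNormedModule) v dv). intros; auto.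
    intros x _; apply (ex_derive_continuous (K:=R_AbsRing) (V:=R_NormedModule)); auto.
Qed.

Definition Pprim (c0 l w : C) : C := (c0 * w + ((/2)%R, 0%R) * l * (w * w))%C.
Definition aff (c0 l w : C) : C := (c0 + l * w)%C.

Lemma ftc_C (P A : R -> C) a b :
  (forall s, is_derive (fun x => fst (P x)) s (fst (A s))) ->
  (forall s, is_derive (fun x => snd (P x)) s (snd (A s))) ->
  (forall s, ex_derive (fun x => fst (A x)) s) ->
  (forall s, ex_derive (fun x => snd (A x)) s) ->
  @is_RInt C_R_NormedModule A a b (P b - P a)%C.
Proof.
  intros H1 H2 H3 H4.
  pose proof (ftc_pair (fun x => fst (P x)) (fun x => snd (P x)) (fun x => fst (A x)) (fun x => snd (A x)) a b H1 H2 H3 H4) as H.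
  eapply is_RInt_ext. 2:{ replace (P b - P a)%C with ((fst (P b) - fst (P a), snd (P b) - snd (P a))).
    exact H. destruct (P b), (P a); unfold Cminus, Cplus, Copp; simpl; f_equal; ring. }
  intros x _. simpl. destruct (A x); reflexivity.
Qed.

Lemma aff_r (c0 l : C) t a b :
  @is_RInt C_R_NormedModule (fun r => aff c0 l (phi r t) * ec t)%C a b
    (Pprim c0 l (phi b t) - Pprim c0 l (phi a t))%C.
Proof.
  destruct c0 as [p q], l as [m n].
  apply (ftc_C (fun r => Pprim (p,q) (m,n) (phi r t))); intros s;
  unfold Pprim, aff, ec, phi, cexp, RtoC, Cmult, Cplus; simpl; auto_derive; auto; field.
Qed.

Lemma aff_t (c0 l : C) r a b :
  @is_RInt C_R_NormedModule (fun t => aff c0 l (phi r t) * dphit r t)%C a b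
    (Pprim c0 l (phi r b) - Pprim c0 l (phi r a))%C.
Proof.
  destruct c0 as [p q], l as [m n].
  apply (ftc_C (fun t => Pprim (p,q) (m,n) (phi r t))); intros s;
  unfold Pprim, aff, dphit, ec, phi, cexp, RtoC, Cmult, Cplus; simpl; auto_derive; auto; field.
Qed.

Lemma nested (lo hi : nat -> R) :
  (forall n, lo n <= lo (S n)) -> (forall n, hi (S n) <= hi n) -> (forall n, lo n <= hi n) ->
  exists x, forall n, lo n <= x <= hi n.
Proof.
  intros Hl Hh Hlh.
  assert (Hhd : forall n, hi n <= hi 0%nat).
  { induction n. lra. specialize (Hh n). lra. }
  assert (Hld : forall n m, (n <= m)%nat -> lo n <= lo m).
  { intros n m Hnm. induction Hnm. lra. specialize (Hl m). lra. }
  assert (Hhd' : forall n m, (n <= m)%nat -> hi m <= hi n).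
  { intros n m Hnm. induction Hnm. lra. specialize (Hh m). lra. }
  destruct (growing_cv lo Hl) as [x Hx].
  { exists (hi 0%nat). intros y [n ->]. specialize (Hlh n). specialize (Hhd n). lra. }
  exists x. intros n. split. apply (growing_ineq lo x Hl Hx).
  destruct (Rle_dec x (hi n)) as [H|H]; auto. exfalso.
  destruct (Hx (x - hi n)) as [N HN]. lra.
  specialize (HN (Nat.max N n) (Nat.le_max_l _ _)).
  pose proof (Hlh (Nat.max N n)). pose proof (Hhd' n (Nat.max N n) (Nat.le_max_r _ _)).
  unfold Rdist in HN. apply Rabs_def2 in HN. lra.
Qed.

Section Goursat.
Variable g : C -> C.
Variable al : R.
Hypothesis Hal : 0 <= al.
Hypothesis Hd : forall r t, 0 <= r -> 0 <= t <= al -> exists l, Cdiff g (phi r t) l.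

Lemma Hc : forall r t, 0 <= r -> 0 <= t <= al -> Ccont g (phi r t).
Proof. intros r t H1 H2. destruct (Hd r t H1 H2) as [l Hl]. eapply Cdiff_Ccont; eauto. Qed.

Definition Qs (Q : rect) (n : nat) : rect := Nat.iter n (next g al) Q.

Lemma Qs_inv Q : r1 Q <= r2 Q -> t1 Q <= t2 Q -> forall n,
  r1 Q <= r1 (Qs Q n) /\ r1 (Qs Q n) <= r2 (Qs Q n) /\ r2 (Qs Q n) <= r2 Q /\
  t1 Q <= t1 (Qs Q n) /\ t1 (Qs Q n) <= t2 (Qs Q n) /\ t2 (Qs Q n) <= t2 Q /\
  r2 (Qs Q n) - r1 (Qs Q n) = (r2 Q - r1 Q) * (/2)^n /\
  t2 (Qs Q n) - t1 (Qs Q n) = (t2 Q - t1 Q) * (/2)^n /\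
  nB g al Q * (/4)^n <= nB g al (Qs Q n).
Proof.
  intros H1 H2. induction n.
  - simpl. lra.
  - destruct IHn as (A1 & A2 & A3 & A4 & A5 & A6 & A7 & A8 & A9).
    change (Qs Q (S n)) with (next g al (Qs Q n)).
    destruct (next_geom g al (Qs Q n) A2 A5) as (B1 & B2 & B3 & B4 & B5 & B6).
    pose proof (next_big g al Hal Hc (Qs Q n)).
    assert (0 < (/2)^n) by (apply pow_lt; lra).
    simpl. replace ((/4) * (/4)^n) with (/4 * (/4)^n) by ring.
    repeat split; try nra.
Qed.

Lemma Qs_mono Q : r1 Q <= r2 Q -> t1 Q <= t2 Q -> forall n,
  r1 (Qs Q n) <= r1 (Qs Q (S n)) /\ r2 (Qs Q (S n)) <= r2 (Qs Q n) /\
  t1 (Qs Q n) <= t1 (Qs Q (S n)) /\ t2 (Qs Q (S n)) <= t2 (Qs Q n).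
Proof.
  intros H1 H2 n. destruct (Qs_inv Q H1 H2 n) as (A1 & A2 & A3 & A4 & A5 & _).
  change (Qs Q (S n)) with (next g al (Qs Q n)).
  destruct (next_geom g al (Qs Q n) A2 A5) as (B1 & B2 & B3 & B4 & B5 & B6). lra.
Qed.

Section Fix.
Variables c0 l : C.
Definition rho1 t r : C := (F1 g al t r - aff c0 l (phi r t) * ec t)%C.
Definition rho2 r t : C := (F2 g al r t - aff c0 l (phi r t) * dphit r t)%C.

Lemma I1_dec t a b : I1 g al t a b =
  (Pprim c0 l (phi b t) - Pprim c0 l (phi a t) + @RInt C_R_CompleteNormedModule (rho1 t) a b)%C.
Proof.
  unfold I1.
  assert (E1 : @ex_RInt C_R_CompleteNormedModule (fun r => aff c0 l (phi r t) * ec t)%C a b)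
    by (eexists; apply aff_r).
  assert (E2 : @ex_RInt C_R_CompleteNormedModule (rho1 t) a b).
  { apply (ex_RInt_minus (V := C_R_CompleteNormedModule)). apply F1_ex; auto. apply Hc. exact E1. }
  apply (is_RInt_unique (V := C_R_CompleteNormedModule)).
  eapply is_RInt_ext. 2:{ apply (is_RInt_plus (V := C_R_NormedModule)). apply (aff_r c0 l t a b).
    apply (RInt_correct (V := C_R_CompleteNormedModule)). exact E2. }
  intros x _. unfold rho1. simpl. change plus with Cplus. ring.
Qed.

Lemma I2_dec r a b : I2 g al r a b =
  (Pprim c0 l (phi r b) - Pprim c0 l (phi r a) + @RInt C_R_CompleteNormedModule (rho2 r) a b)%C.
Proof.
  unfold I2.
  assert (E1 : @ex_RInt C_R_CompleteNormedModule (fun t => aff c0 l (phi r t) * dphit r t)%C a b)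
    by (eexists; apply aff_t).
  assert (E2 : @ex_RInt C_R_CompleteNormedModule (rho2 r) a b).
  { apply (ex_RInt_minus (V := C_R_CompleteNormedModule)). apply F2_ex; auto. apply Hc. exact E1. }
  apply (is_RInt_unique (V := C_R_CompleteNormedModule)).
  eapply is_RInt_ext. 2:{ apply (is_RInt_plus (V := C_R_NormedModule)). apply (aff_t c0 l r a b).
    apply (RInt_correct (V := C_R_CompleteNormedModule)). exact E2. }
  intros x _. unfold rho2. simpl. change plus with Cplus. ring.
Qed.
End Fix.

End Goursat.

Section Goursat2.
Variable g : C -> C.
Variable al : R.
Hypothesis Hal : 0 <= al.
Hypothesis Hd : forall r t, 0 <= r -> 0 <= t <= al -> exists l, Cdiff g (phi r t) l.

Lemma rho1_bound c0 l t a b M : a <= b -> (forall r, a <= r <= b -> Cmod (rho1 g al c0 l t r) <= M) ->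
  Cmod (@RInt C_R_CompleteNormedModule (rho1 g al c0 l t) a b) <= (b - a) * M.
Proof.
  intros Hab HM. rewrite Cmod_norm.
  apply (norm_RInt_le_const (V := C_R_NormedModule) (rho1 g al c0 l t) a b _ M Hab).
  intros x Hx. rewrite <- Cmod_norm. auto.
  apply (RInt_correct (V := C_R_CompleteNormedModule)).
  apply (ex_RInt_minus (V := C_R_CompleteNormedModule)). apply F1_ex; auto. apply Hc; auto.
  eexists; apply aff_r.
Qed.

Lemma rho2_bound c0 l r a b M : a <= b -> (forall t, a <= t <= b -> Cmod (rho2 g al c0 l r t) <= M) ->
  Cmod (@RInt C_R_CompleteNormedModule (rho2 g al c0 l r) a b) <= (b - a) * M.
Proof.
  intros Hab HM. rewrite Cmod_norm.
  apply (norm_RInt_le_const (V := C_R_NormedModule) (rho2 g al c0 l r) a b _ M Hab).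
  intros x Hx. rewrite <- Cmod_norm. auto.
  apply (RInt_correct (V := C_R_CompleteNormedModule)).
  apply (ex_RInt_minus (V := C_R_CompleteNormedModule)). apply F2_ex; auto. apply Hc; auto.
  eexists; apply aff_t.
Qed.

Lemma Cmod_dphit r t : Cmod (dphit r t) = Rabs r.
Proof.
  unfold dphit. rewrite Cmod_mult. unfold ec. rewrite Cmod_ec, Rmult_1_r.
  unfold Cmod; simpl. rewrite Rmult_0_l, Rplus_0_l, Rmult_1_r. apply sqrt_Rsqr_abs.
Qed.

Theorem goursat Q : 0 <= r1 Q <= r2 Q -> 0 <= t1 Q <= t2 Q -> t2 Q <= al -> Bnd g al Q = 0%C.
Proof.
  intros HQr HQt HQa.
  destruct (Req_dec (nB g al Q) 0) as [H0|H0].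
  { apply Cmod_eq_0. exact H0. }
  exfalso. set (eta := nB g al Q).
  assert (Heta : 0 < eta) by (pose proof (Cmod_ge_0 (Bnd g al Q)); unfold eta, nB in *; lra).
  assert (Hr : r1 Q <= r2 Q) by lra. assert (Ht : t1 Q <= t2 Q) by lra.
  pose proof (Qs_inv g al Hal Hd Q Hr Ht) as Inv.
  pose proof (Qs_mono g al Hal Hd Q Hr Ht) as Mono.
  destruct (nested (fun n => r1 (Qs g al Q n)) (fun n => r2 (Qs g al Q n))) as [r0 Hr0].
  { intros n; apply Mono. } { intros n; apply Mono. } { intros n; apply Inv. }
  destruct (nested (fun n => t1 (Qs g al Q n)) (fun n => t2 (Qs g al Q n))) as [t0 Ht0].
  { intros n; apply Mono. } { intros n; apply Mono. } { intros n; apply Inv. }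
  assert (Hr0' : r1 Q <= r0 <= r2 Q).
  { destruct (Hr0 0%nat). simpl in *. lra. }
  assert (Ht0' : t1 Q <= t0 <= t2 Q).
  { destruct (Ht0 0%nat). simpl in *. lra. }
  destruct (Hd r0 t0 ltac:(lra) ltac:(lra)) as [l Hl].
  set (w0 := phi r0 t0). set (c0 := (g w0 - l * w0)%C).
  set (Rm := r2 Q). set (dr := r2 Q - r1 Q). set (dt := t2 Q - t1 Q).
  set (D0 := dr + 2 * Rm * dt).
  assert (HD0 : 0 <= D0) by (unfold D0, dr, dt, Rm; nra).
  set (K := 2 * (dr + Rm * dt) * D0).
  assert (HK : 0 <= K) by (unfold K, dr, dt, Rm in *; apply Rmult_le_pos; nra).
  set (eps := eta / (2 * (K + 1))).
  assert (Heps : 0 < eps) by (apply Rdiv_lt_0_compat; lra).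
  destruct (Hl eps Heps) as [delta [Hdelta Pd]]. fold w0 in Pd.
  destruct (pow_lt_1_zero (/2) ltac:(rewrite Rabs_right; lra) (delta / (D0 + 1)) ltac:(apply Rdiv_lt_0_compat; lra)) as [N HN].
  specialize (HN N (le_n N)).
  set (h := (/2)^N) in *.
  assert (Hh : 0 < h) by (apply pow_lt; lra).
  rewrite Rabs_right in HN by lra.
  assert (HDh : D0 * h < delta).
  { apply Rmult_lt_compat_l with (r := D0 + 1) in HN; [|lra]. field_simplify in HN; nra. }
  set (Qn := Qs g al Q N).
  destruct (Inv N) as (A1 & A2 & A3 & A4 & A5 & A6 & A7 & A8 & A9). fold Qn in A1, A2, A3, A4, A5, A6, A7, A8, A9.
  fold h in A7, A8. fold dr in A7. fold dt in A8.
  assert (Hrr0 := Hr0 N). assert (Htt0 := Ht0 N). fold Qn in Hrr0, Htt0.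
  assert (PB : forall r t, r1 Qn <= r <= r2 Qn -> t1 Qn <= t <= t2 Qn ->
     Cmod (g (phi r t) - aff c0 l (phi r t)) <= eps * (D0 * h)).
  { intros r t Hr' Ht'.
    assert (Cmod (phi r t - w0) <= D0 * h).
    { unfold w0. eapply Rle_trans. apply phi_lip.
      rewrite (Rabs_right r0) by lra.
      assert (Rabs (r - r0) <= dr * h) by (apply Rabs_le; lra).
      assert (Rabs (t - t0) <= dt * h) by (apply Rabs_le; lra).
      assert (r0 <= Rm) by (unfold Rm; lra).
      assert (0 <= Rabs (t - t0)) by apply Rabs_pos.
      assert (2 * r0 * Rabs (t - t0) <= 2 * Rm * (dt * h)) by nra.
      unfold D0. nra. }
    replace (g (phi r t) - aff c0 l (phi r t))%C with (g (phi r t) - g w0 - l * (phi r t - w0))%C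
      by (unfold aff, c0; ring).
    eapply Rle_trans. apply Pd. lra. apply Rmult_le_compat_l; lra. }
  assert (EB : Bnd g al Qn = (@RInt C_R_CompleteNormedModule (rho1 g al c0 l (t1 Qn)) (r1 Qn) (r2 Qn)
       + @RInt C_R_CompleteNormedModule (rho2 g al c0 l (r2 Qn)) (t1 Qn) (t2 Qn)
       - @RInt C_R_CompleteNormedModule (rho1 g al c0 l (t2 Qn)) (r1 Qn) (r2 Qn)
       - @RInt C_R_CompleteNormedModule (rho2 g al c0 l (r1 Qn)) (t1 Qn) (t2 Qn))%C).
  { unfold Bnd. rewrite !(I1_dec g al Hal Hd c0 l), !(I2_dec g al Hal Hd c0 l). ring. }
  assert (Hdom : forall r t, r1 Qn <= r <= r2 Qn -> t1 Qn <= t <= t2 Qn -> gg g al r t = g (phi r t)).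
  { intros r t Hr' Ht'. unfold gg. rewrite Rmax0_id by lra. rewrite ct_id by lra. reflexivity. }
  assert (B1 : forall t, t1 Qn <= t <= t2 Qn ->
     Cmod (@RInt C_R_CompleteNormedModule (rho1 g al c0 l t) (r1 Qn) (r2 Qn)) <= (dr * h) * (eps * (D0 * h))).
  { intros t Ht'. rewrite <- A7. apply rho1_bound. lra. intros r Hr'.
    unfold rho1, F1. rewrite Hdom by lra.
    replace (g (phi r t) * ec t - aff c0 l (phi r t) * ec t)%C with ((g (phi r t) - aff c0 l (phi r t)) * ec t)%C by ring.
    rewrite Cmod_mult. unfold ec. rewrite Cmod_ec, Rmult_1_r. apply PB; lra. }
  assert (B2 : forall r, r1 Qn <= r <= r2 Qn ->
     Cmod (@RInt C_R_CompleteNormedModule (rho2 g al c0 l r) (t1 Qn) (t2 Qn)) <= (dt * h) * (eps * (D0 * h) * Rm)).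
  { intros r Hr'. rewrite <- A8. apply rho2_bound. lra. intros t Ht'.
    unfold rho2, F2. rewrite Hdom by lra.
    replace (g (phi r t) * dphit r t - aff c0 l (phi r t) * dphit r t)%C with ((g (phi r t) - aff c0 l (phi r t)) * dphit r t)%C by ring.
    rewrite Cmod_mult, Cmod_dphit. rewrite Rabs_right by lra.
    apply Rmult_le_compat. apply Cmod_ge_0. lra. apply PB; lra. unfold Rm; lra. }
  assert (Hup : nB g al Qn <= K * eps * (h * h)).
  { unfold nB. rewrite EB.
    pose proof (B1 (t1 Qn) ltac:(lra)). pose proof (B1 (t2 Qn) ltac:(lra)).
    pose proof (B2 (r1 Qn) ltac:(lra)). pose proof (B2 (r2 Qn) ltac:(lra)).
    unfold Cminus.
    eapply Rle_trans. apply Cmod_triangle. rewrite Cmod_opp.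
    eapply Rle_trans. apply Rplus_le_compat_r. apply Cmod_triangle. rewrite Cmod_opp.
    eapply Rle_trans. apply Rplus_le_compat_r. apply Rplus_le_compat_r. apply Cmod_triangle.
    unfold K. nra. }
  assert (H4 : (/4)^N = h * h) by (unfold h; rewrite <- Rpow_mult_distr; f_equal; field).
  rewrite H4 in A9. fold eta in A9.
  assert (K * eps < eta).
  { unfold eps. apply Rmult_lt_reg_r with (r := 2 * (K + 1)). lra.
    field_simplify; [|lra]. nra. }
  assert (0 < h * h) by nra. nra.
Qed.

End Goursat2.

Lemma is_RInt_Cmult_r (h : R -> C) (c : C) a b l :
  @is_RInt C_R_NormedModule h a b l ->
  @is_RInt C_R_NormedModule (fun x => h x * c)%C a b (l * c)%C.
Proof.
  intros H. destruct c as [cr ci].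
  pose proof (is_RInt_fct_extend_fst (U := R_NormedModule) (V := R_NormedModule) h a b l H) as H1.
  pose proof (is_RInt_fct_extend_snd (U := R_NormedModule) (V := R_NormedModule) h a b l H) as H2.
  pose proof (is_RInt_scal (V := R_NormedModule) _ _ _ cr _ H1) as H1r.
  pose proof (is_RInt_scal (V := R_NormedModule) _ _ _ ci _ H1) as H1i.
  pose proof (is_RInt_scal (V := R_NormedModule) _ _ _ cr _ H2) as H2r.
  pose proof (is_RInt_scal (V := R_NormedModule) _ _ _ ci _ H2) as H2i.
  pose proof (is_RInt_minus (V := R_NormedModule) _ _ _ _ _ _ H1r H2i) as E1.
  pose proof (is_RInt_plus (V := R_NormedModule) _ _ _ _ _ _ H1i H2r) as E2.
  replace (l * (cr, ci))%C with ((minus (scal cr (fst l)) (scal ci (snd l)) : R),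
                                 (plus (scal ci (fst l)) (scal cr (snd l)) : R)).
  2:{ destruct l; unfold minus, plus, opp, scal; simpl; unfold mult; simpl; unfold Cmult; simpl; f_equal; ring. }
  eapply is_RInt_ext. 2:{ apply (is_RInt_fct_extend_pair (U := R_NormedModule) (V := R_NormedModule)
     (fun x => (minus (scal cr (fst (h x))) (scal ci (snd (h x))) : R, plus (scal ci (fst (h x))) (scal cr (snd (h x))) : R))); simpl; [exact E1|exact E2]. }
  intros x _. simpl. destruct (h x); unfold minus, plus, opp, scal; simpl; unfold mult; simpl; unfold Cmult; simpl; f_equal; ring.
Qed.

Lemma ex_RInt_clamp (h hc : R -> C) a b :
  (forall x, ccont hc x) -> (forall x, 0 <= x -> hc x = h x) -> 0 <= a -> 0 <= b ->
  @ex_RInt C_R_CompleteNormedModule h a b.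
Proof.
  intros Hc He Ha Hb. apply (ex_RInt_ext (V := C_R_CompleteNormedModule) hc).
  intros x Hx. apply He. pose proof (Rmin_glb a b 0). unfold Rmin in *; destruct Rle_dec; lra.
  apply ex_RInt_ccont. intros; auto.
Qed.

Lemma RInt_Cmult_r (h : R -> C) (c : C) a b :
  @ex_RInt C_R_CompleteNormedModule h a b ->
  @RInt C_R_CompleteNormedModule (fun x => h x * c)%C a b = (@RInt C_R_CompleteNormedModule h a b * c)%C.
Proof.
  intros H. apply (is_RInt_unique (V := C_R_CompleteNormedModule)).
  apply is_RInt_Cmult_r. apply (RInt_correct (V := C_R_CompleteNormedModule)). exact H.
Qed.

Lemma phi_0 r : phi r 0 = RtoC r.
Proof. rewrite phi_eq, cos_0, sin_0. unfold RtoC. f_equal; ring. Qed.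

Lemma ec_0 : ec 0 = 1%C.
Proof. unfold ec, cexp; simpl. rewrite exp_0, cos_0, sin_0. unfold RtoC. f_equal; ring. Qed.

Lemma zero_mul_aux (a b : C) : (a * (RtoC 0 * b))%C = RtoC 0.
Proof. ring. Qed.

Lemma sum_aux (a b c d : C) : (a + b - c - d)%C = RtoC 0 -> d = RtoC 0 -> (a + b)%C = c.
Proof. intros H Hd. subst d. replace (a + b)%C with ((a + b - c - RtoC 0) + c)%C by ring. rewrite H. ring. Qed.

Section CL.
Variable g : C -> C.
Variable al : R.
Hypothesis Hal : 0 <= al.
Hypothesis Hd : forall r t, 0 <= r -> 0 <= t <= al -> exists l, Cdiff g (phi r t) l.

Lemma ray_ex a b : 0 <= a -> 0 <= b ->
  @ex_RInt C_R_CompleteNormedModule (fun r => g (phi r al)) a b.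
Proof.
  intros Ha Hb. apply (ex_RInt_clamp _ (fun r => gg g al r al)); auto.
  intros x. apply gg_cont_r; auto. apply Hc; auto.
  intros x Hx. unfold gg. rewrite Rmax0_id by auto. rewrite ct_id by lra. reflexivity.
Qed.

Lemma real_ex a b : 0 <= a -> 0 <= b ->
  @ex_RInt C_R_CompleteNormedModule (fun r => g (RtoC r)) a b.
Proof.
  intros Ha Hb. apply (ex_RInt_clamp _ (fun r => gg g al r 0)); auto.
  intros x. apply gg_cont_r; auto. apply Hc; auto.
  intros x Hx. unfold gg. rewrite Rmax0_id by auto. rewrite ct_id by lra. rewrite phi_0. reflexivity.
Qed.


Theorem cauchy_sector R0 : 0 <= R0 ->
  (@RInt C_R_CompleteNormedModule (fun r => g (RtoC r)) 0 R0
   + @RInt C_R_CompleteNormedModule (fun t => g (phi R0 t) * dphit R0 t)%C 0 al)%C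
  = (@RInt C_R_CompleteNormedModule (fun r => g (phi r al)) 0 R0 * ec al)%C.
Proof.
  intros HR.
  pose proof (goursat g al Hal Hd (mkR 0 R0 0 al) ltac:(simpl; lra) ltac:(simpl; lra) ltac:(simpl; lra)) as G.
  unfold Bnd, I1, I2 in G; simpl in G.
  rewrite (RInt_ext (V := C_R_CompleteNormedModule) (F1 g al 0) (fun r => g (RtoC r))) in G.
  2:{ intros x Hx. rewrite Rmin_left, Rmax_right in Hx by lra. unfold F1, gg.
      rewrite Rmax0_id by lra. rewrite ct_id by lra. rewrite phi_0, ec_0. apply Cmult_1_r. }
  rewrite (RInt_ext (V := C_R_CompleteNormedModule) (F2 g al R0) (fun t => g (phi R0 t) * dphit R0 t)%C) in G.
  2:{ intros x Hx. rewrite Rmin_left, Rmax_right in Hx by lra. unfold F2, gg.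
      rewrite Rmax0_id by lra. rewrite ct_id by lra. reflexivity. }
  rewrite (RInt_ext (V := C_R_CompleteNormedModule) (F1 g al al) (fun r => g (phi r al) * ec al)%C) in G.
  2:{ intros x Hx. rewrite Rmin_left, Rmax_right in Hx by lra. unfold F1, gg.
      rewrite Rmax0_id by lra. rewrite ct_id by lra. reflexivity. }
  rewrite (RInt_ext (V := C_R_CompleteNormedModule) (F2 g al 0) (fun _ => RtoC 0)) in G.
  2:{ intros x Hx. unfold F2, dphit. replace ((0, 0) : C) with (RtoC 0) by reflexivity. apply zero_mul_aux. }
  rewrite RInt_const in G. rewrite RInt_Cmult_r in G by (apply ray_ex; lra).
  eapply sum_aux. exact G. apply (scal_zero_r (V := C_R_NormedModule)).
Qed.
End CL.

Lemma int_expm (u v : R) : is_RInt (fun y => exp (- y)) u v (exp (- u) - exp (- v)).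
Proof.
  replace (exp (- u) - exp (- v)) with (minus ((fun y => - exp (- y)) v) ((fun y => - exp (- y)) u)).
  2:{ unfold minus, plus, opp; simpl. ring. }
  apply (is_RInt_derive (V := R_CompleteNormedModule) (fun y => - exp (- y))).
  - intros x _. auto_derive. auto. ring.
  - intros x _. apply (ex_derive_continuous (K := R_AbsRing) (V := R_NormedModule)). auto_derive. auto.
Qed.

Lemma int_expm_bound {V : CompleteNormedModule R_AbsRing} (h : R -> V) M u v :
  0 <= u <= v -> ex_RInt h u v -> (forall y, u <= y <= v -> norm (h y) <= M * exp (- y)) ->
  norm (RInt h u v) <= M * exp (- u).
Proof.
  intros Huv Hex HM.
  assert (0 <= M). { specialize (HM u ltac:(lra)). pose proof (norm_ge_0 (h u)).
    pose proof (exp_pos (- u)). nra. }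
  eapply Rle_trans. apply (norm_RInt_le h (fun y => M * exp (- y)) u v _ (M * (exp (- u) - exp (- v)))).
  lra. auto. apply RInt_correct; auto.
  apply (is_RInt_scal (V := R_NormedModule) _ _ _ M _ (int_expm u v)).
  pose proof (exp_pos (- v)). nra.
Qed.

Lemma eventually_big (P : R -> Prop) N : (forall b, N < b -> P b) -> Rbar_locally p_infty P.
Proof. intros H. exists N. auto. Qed.

Lemma expm_le N : 0 <= N -> exp (- N) <= / (1 + N).
Proof.
  intros H. rewrite exp_Ropp. apply Rinv_le_contravar. lra. apply exp_ineq1_le.
Qed.

Lemma exp_small M eps : 0 < eps -> exists N, 0 <= N /\ M * exp (- N) < eps.
Proof.
  intros He. destruct (Rle_dec M 0) as [HM|HM].
  - exists 0. split. lra. pose proof (exp_pos (-0)). nra.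
  - exists (M / eps). assert (0 <= M / eps) by (apply Rlt_le, Rdiv_lt_0_compat; lra).
    split. auto. pose proof (expm_le (M / eps) H).
    assert (M * exp (- (M / eps)) <= M * / (1 + M / eps)) by (apply Rmult_le_compat_l; lra).
    assert (M * / (1 + M / eps) < eps).
    { apply Rmult_lt_reg_r with (r := 1 + M / eps). lra.
      rewrite Rmult_assoc, Rinv_l by lra. field_simplify; [|lra]. lra. }
    lra.
Qed.

Lemma mp_aux (G : AbelianGroup) (a b : G) : minus (plus a b) a = b.
Proof. unfold minus. rewrite (plus_comm a), <- plus_assoc.
 pose proof (plus_opp_r a) as H. pose proof (plus_zero_r b) as H2.
 etransitivity; [|exact H2]. f_equal. exact H. Qed.

Lemma GIL {V : CompleteNormedModule R_AbsRing} (h : R -> V) M :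
  (forall u v, 0 <= u -> 0 <= v -> ex_RInt h u v) ->
  (forall y, 0 <= y -> norm (h y) <= M * exp (- y)) ->
  exists L, filterlim (fun b => RInt h 0 b) (Rbar_locally p_infty) (locally L) /\
            is_RInt_gen h (at_point 0) (Rbar_locally p_infty) L.
Proof.
  intros Hex HM.
  assert (Hc : exists L, filterlim (fun b => RInt h 0 b) (Rbar_locally p_infty) (locally L)).
  { apply (filterlim_locally_cauchy (F := Rbar_locally p_infty)).
    intros eps. destruct (exp_small M eps (cond_pos eps)) as [N [HN HNe]].
    exists (fun b => N < b). split. exists N; auto.
    assert (K : forall u v, N < u -> u <= v -> norm (minus (RInt h 0 v) (RInt h 0 u)) < eps).
    { intros u v Hu Huv.
      rewrite <- (RInt_Chasles h 0 u v) by (apply Hex; lra).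
      replace (minus (plus (RInt h 0 u) (RInt h u v)) (RInt h 0 u)) with (RInt h u v).
      2:{ symmetry. apply mp_aux. }
      eapply Rle_lt_trans. apply int_expm_bound. lra. apply Hex; lra. intros; apply HM; lra.
      assert (exp (- u) <= exp (- N)) by (apply exp_le; lra).
      assert (0 <= M). { specialize (HM u ltac:(lra)). pose proof (norm_ge_0 (h u)).
        pose proof (exp_pos (- u)). nra. }
      nra. }
    intros u v Hu Hv. destruct (Rle_dec u v).
    - exact (norm_compat1 (V := V) _ _ _ (K u v ltac:(lra) ltac:(lra))).
    - apply ball_sym. exact (norm_compat1 (V := V) _ _ _ (K v u ltac:(lra) ltac:(lra))). }
  destruct Hc as [L HL]. exists L. split; auto.
  intros P HP. specialize (HL P HP).
  apply (Filter_prod _ _ _ (fun x => x = 0) (fun b => 0 < b /\ P (RInt h 0 b))).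
  - reflexivity.
  - apply filter_and; auto. exists 0. auto.
  - intros x y -> [Hy Py]. exists (RInt h 0 y). split; auto. apply RInt_correct. apply Hex; lra.
Qed.

Lemma lim_eps (T : Type) (F : (T -> Prop) -> Prop) (f : T -> C) (L : C) :
  Filter F -> filterlim f F (locally L) -> forall eps, 0 < eps -> F (fun x => Cmod (f x - L) < eps).
Proof.
  intros HF H eps He.
  assert (locally L (fun z => Cmod (z - L) < eps)).
  { exists (mkposreal (eps / sqrt 2) (Rdiv_lt_0_compat _ _ He (sqrt_lt_R0 2 ltac:(lra)))).
    intros z Hz. apply C_NormedModule_mixin_compat2 in Hz. simpl in Hz.
    assert (sqrt 2 * (eps / sqrt 2) = eps) by (field; apply Rgt_not_eq, sqrt_lt_R0; lra).
    change (minus z L) with (z - L)%C in Hz. lra. }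
  apply H in H0. exact H0.
Qed.

Lemma eps_lim (T : Type) (F : (T -> Prop) -> Prop) (f : T -> C) (L : C) :
  Filter F -> (forall eps, 0 < eps -> F (fun x => Cmod (f x - L) < eps)) -> filterlim f F (locally L).
Proof.
  intros HF H P [eps HP]. unfold filtermap. apply (filter_imp (fun x => Cmod (f x - L) < eps)).
  intros x Hx. apply HP. apply C_NormedModule_mixin_compat1. exact Hx.
  apply H. apply cond_pos.
Qed.

Lemma int_C (h hc : R -> C) M :
  (forall x, ccont hc x) -> (forall x, 0 <= x -> hc x = h x) ->
  (forall y, 0 <= y -> Cmod (h y) <= M * exp (- y)) ->
  abs_integrable_0_inf h /\ exists L, is_integral_0_inf h L /\
    filterlim (fun b => @RInt C_R_CompleteNormedModule h 0 b) (Rbar_locally p_infty) (locally L).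
Proof.
  intros Hc He HM. split.
  - destruct (GIL (V := R_CompleteNormedModule) (fun y => Cmod (h y)) M) as [L [_ HL]].
    + intros u v Hu Hv. apply (ex_RInt_ext (V := R_CompleteNormedModule) (fun y => Cmod (hc y))).
      intros x Hx. rewrite He. reflexivity. pose proof (Rmin_glb u v 0). unfold Rmin in *; destruct Rle_dec; lra.
      apply ex_RInt_Cmod. intros; auto.
    + intros y Hy. change (Rabs (Cmod (h y)) <= M * exp (- y)). rewrite Rabs_right by (apply Rle_ge, Cmod_ge_0). auto.
    + exists L. exact HL.
  - destruct (GIL (V := C_R_CompleteNormedModule) h M) as [L [HL1 HL2]].
    + intros u v Hu Hv. apply (ex_RInt_clamp h hc); auto.
    + intros y Hy. rewrite <- Cmod_norm. auto.
    + exists L. split; auto.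
Qed.

Definition EE (q : C) (c : R) (z : C) : C := cexp (q * ((z - RtoC c) * (z - RtoC c)))%C.

Lemma Cmod_EE q c z : Cmod (EE q c z) =
  exp (fst q * ((fst z - c)^2 - (snd z)^2) - snd q * (2 * (fst z - c) * snd z)).
Proof. unfold EE. rewrite Cmod_cexp. f_equal. destruct q, z; simpl. ring. Qed.

Lemma Cdiff_EE q c z : Cdiff (EE q c) z (cexp (q * ((z - RtoC c) * (z - RtoC c))) * (2 * q * (z - RtoC c)))%C.
Proof. apply (Cdiff_cexp_comp (fun w => q * ((w - RtoC c) * (w - RtoC c)))%C). apply Cdiff_sq. Qed.

Lemma gauss c K y : 0 < c -> exp (- c * y^2 + K * y) <= exp ((K + 1)^2 / (4 * c)) * exp (- y).
Proof.
  intros Hc. rewrite <- exp_plus. apply exp_le.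
  assert (0 <= c * (y - (K + 1) / (2 * c))^2) by (apply Rmult_le_pos; [lra| apply pow2_ge_0]).
  replace (c * (y - (K + 1) / (2 * c))^2) with (c * y^2 - (K + 1) * y + (K + 1)^2 / (4 * c)) in H
    by (field; lra).
  lra.
Qed.

Lemma Cmod_phi r t : 0 <= r -> Cmod (phi r t) = r.
Proof. intros H. unfold phi. rewrite Cmod_mult, Cmod_R, Rabs_right by lra. rewrite Cmod_ec. ring. Qed.

Lemma phi_sector al r t : 0 <= r -> 0 <= t <= al -> sector al (phi r t).
Proof. intros H1 H2. exists r, t. repeat split; auto; lra. Qed.

Lemma trig_facts al t : 0 < al < PI / 2 -> 0 <= t <= al ->
  cos al <= cos t /\ 0 < cos al /\ 0 <= sin t /\ sin t <= sin al /\ 0 < sin al /\ sin t <= 1 /\ cos t <= 1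
  /\ sin t ^ 2 + cos t ^ 2 = 1.
Proof.
  intros Hal Ht. pose proof PI_RGT_0.
  repeat split.
  - destruct (Req_dec t al). subst; lra. apply Rlt_le, cos_decreasing_1; lra.
  - apply cos_gt_0; lra.
  - apply sin_ge_0; lra.
  - apply sin_incr_1; lra.
  - apply sin_gt_0; lra.
  - apply SIN_bound.
  - apply COS_bound.
  - rewrite <- !Rsqr_pow2. apply sin2_cos2.
Qed.

Section Common.
Variables (a y1 al : R) (f : C -> C).
Hypothesis Ha : 0 < a.
Hypothesis Hal : 0 < al < PI / 2.
Hypothesis Hf : forall z, sector al z -> ex_derive (K := C_AbsRing) (V := C_NormedModule) f z.

Definition g0 (z : C) : C := (EE (0, a) y1 z * f z)%C.

Lemma g0_rot y : g0 (phi y al) = rotated_integrand a y1 al f y.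
Proof. reflexivity. Qed.

Lemma g0_real y : g0 (RtoC y) = real_integrand a y1 f y.
Proof.
  unfold g0, real_integrand, EE. f_equal. f_equal. unfold RtoC, Cmult, Cminus, Cplus, Copp; simpl.
  f_equal; ring.
Qed.

Lemma Hd_f r t : 0 <= r -> 0 <= t <= al -> exists l, Cdiff f (phi r t) l.
Proof. intros H1 H2. apply Cdiff_ex_derive. apply Hf. apply phi_sector; auto. Qed.

Lemma Hd0 r t : 0 <= r -> 0 <= t <= al -> exists l, Cdiff g0 (phi r t) l.
Proof.
  intros H1 H2. destruct (Hd_f r t H1 H2) as [l Hl].
  eexists. apply (Cdiff_mult (EE (0, a) y1) f). apply Cdiff_EE. exact Hl.
Qed.

Lemma Hc0 r t : 0 <= r -> 0 <= t <= al -> Ccont g0 (phi r t).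
Proof. intros H1 H2. destruct (Hd0 r t H1 H2) as [l Hl]. eapply Cdiff_Ccont; eauto. Qed.

Lemma mod_g0 r t : Cmod (g0 (phi r t)) = exp (- a * (2 * (r * cos t - y1) * (r * sin t))) * Cmod (f (phi r t)).
Proof.
  unfold g0. rewrite Cmod_mult, Cmod_EE. f_equal. f_equal. rewrite phi_eq. simpl. ring.
Qed.

Definition cc := 2 * a * cos al * sin al.

Lemma cc_pos : 0 < cc.
Proof.
  destruct (trig_facts al al Hal ltac:(lra)) as (_ & H1 & _ & _ & H2 & _).
  unfold cc. repeat apply Rmult_lt_0_compat; lra.
Qed.

Lemma ray_bound A B : 0 <= A -> 0 <= B ->
  (forall y, 0 <= y -> Cmod (f (phi y al)) <= A * exp (B * y)) ->
  forall y, 0 <= y -> Cmod (g0 (phi y al)) <= A * exp (- cc * y^2 + (2 * a * Rabs y1 + B) * y).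
Proof.
  intros HA HB Hb y Hy. rewrite mod_g0.
  destruct (trig_facts al al Hal ltac:(lra)) as (_ & Hca & _ & _ & Hsa & Hs1 & _).
  assert (exp (- a * (2 * (y * cos al - y1) * (y * sin al))) <= exp (- cc * y^2 + 2 * a * Rabs y1 * y)).
  { apply exp_le. unfold cc.
    assert (y1 * sin al <= Rabs y1).
    { pose proof (Rle_abs y1). pose proof (Rabs_pos y1). destruct (Rle_dec 0 y1); nra. }
    assert (2 * a * y * (y1 * sin al) <= 2 * a * y * Rabs y1) by (apply Rmult_le_compat_l; nra).
    replace (- a * (2 * (y * cos al - y1) * (y * sin al))) with
      (- (2 * a * cos al * sin al) * y^2 + 2 * a * y * (y1 * sin al)) by ring.
    lra. }
  specialize (Hb y Hy). pose proof (Cmod_ge_0 (f (phi y al))).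
  replace (exp (- cc * y^2 + (2 * a * Rabs y1 + B) * y)) with
    (exp (- cc * y^2 + 2 * a * Rabs y1 * y) * exp (B * y)) by (rewrite <- exp_plus; f_equal; ring).
  pose proof (exp_pos (- a * (2 * (y * cos al - y1) * (y * sin al)))).
  pose proof (exp_pos (B * y)).
  nra.
Qed.

Lemma rot_int A B : 0 <= A -> 0 <= B ->
  (forall y, 0 <= y -> Cmod (f (phi y al)) <= A * exp (B * y)) ->
  abs_integrable_0_inf (rotated_integrand a y1 al f) /\
  exists L, is_integral_0_inf (rotated_integrand a y1 al f) L /\
    filterlim (fun b => @RInt C_R_CompleteNormedModule (fun y => g0 (phi y al)) 0 b) (Rbar_locally p_infty) (locally L).
Proof.
  intros HA HB Hb.
  apply (int_C (fun y => g0 (phi y al)) (fun y => gg g0 al y al) (A * exp ((2 * a * Rabs y1 + B + 1)^2 / (4 * cc)))).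
  - intros x. apply gg_cont_r. lra. intros; apply Hc0; auto.
  - intros x Hx. unfold gg. rewrite Rmax0_id, ct_id by lra. reflexivity.
  - intros y Hy. pose proof (ray_bound A B HA HB Hb y Hy) as H1.
    pose proof (gauss cc (2 * a * Rabs y1 + B) y cc_pos) as H2.
    replace (- cc * y ^ 2 + (2 * a * Rabs y1 + B) * y) with (- cc * y ^ 2 + (2 * a * Rabs y1 + B) * y) in H1 by reflexivity.
    eapply Rle_trans. exact H1. rewrite (Rmult_assoc A). apply Rmult_le_compat_l. auto. exact H2.
Qed.

End Common.

Lemma sin_ge_tcos t : 0 <= t <= PI / 2 -> t * cos t <= sin t.
Proof.
  intros Ht. destruct (Req_dec t 0). subst. rewrite sin_0. lra.
  destruct (MVT_cor2 (fun s => sin s - s * cos s) (fun s => s * sin s) 0 t) as [c [E Hc]].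
  lra. intros c _. apply is_derive_Reals. auto_derive. auto. ring.
  rewrite sin_0, Rmult_0_l in E. pose proof PI_RGT_0.
  assert (0 <= sin c) by (apply sin_ge_0; lra).
  assert (0 <= c * sin c * (t - 0)) by (apply Rmult_le_pos; [apply Rmult_le_pos; lra | lra]). lra.
Qed.

Lemma int_expk k a : 0 < k -> is_RInt (fun t => exp (- k * t)) 0 a ((1 - exp (- k * a)) / k).
Proof.
  intros Hk.
  replace ((1 - exp (- k * a)) / k) with (minus ((fun s => - exp (- k * s) / k) a) ((fun s => - exp (- k * s) / k) 0)).
  2:{ unfold minus, plus, opp; simpl. rewrite Rmult_0_r, exp_0. field. lra. }
  apply (is_RInt_derive (V := R_CompleteNormedModule) (fun s => - exp (- k * s) / k)).
  - intros x _. auto_derive. auto. field. lra.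
  - intros x _. apply (ex_derive_continuous (K := R_AbsRing) (V := R_NormedModule)). auto_derive. auto.
Qed.

Lemma RInt_C_bound (h : R -> C) (b : R -> R) a c lb : a <= c ->
  @ex_RInt C_R_CompleteNormedModule h a c -> (forall t, a <= t <= c -> Cmod (h t) <= b t) ->
  is_RInt b a c lb -> Cmod (@RInt C_R_CompleteNormedModule h a c) <= lb.
Proof.
  intros Hac Hex Hb Hib. rewrite Cmod_norm.
  apply (norm_RInt_le (V := C_R_NormedModule) h b a c _ lb Hac).
  intros; rewrite <- Cmod_norm; auto.
  apply (RInt_correct (V := C_R_CompleteNormedModule)). exact Hex.
  exact Hib.
Qed.

Lemma arc_ex (g : C -> C) al R0 : 0 < al -> 0 <= R0 ->
  (forall r t, 0 <= r -> 0 <= t <= al -> Ccont g (phi r t)) ->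
  @ex_RInt C_R_CompleteNormedModule (fun t => g (phi R0 t) * dphit R0 t)%C 0 al.
Proof.
  intros Hal HR Hc.
  apply (ex_RInt_ext (V := C_R_CompleteNormedModule) (fun t => gg g al R0 t * dphit R0 t)%C).
  intros x Hx. rewrite Rmin_left, Rmax_right in Hx by lra. unfold gg. rewrite Rmax0_id, ct_id by lra. reflexivity.
  apply ex_RInt_ccont. intros z _. apply ccont_mult. apply gg_cont_t. lra. auto. apply dphit_cont.
Qed.

Section PartII.
Variables (a y1 al : R) (f : C -> C).
Hypothesis Ha : 0 < a.
Hypothesis Hal : 0 < al < PI / 2.
Hypothesis Hf : forall z, sector al z -> ex_derive (K := C_AbsRing) (V := C_NormedModule) f z.
Variables A B : R.
Hypothesis HA : 0 <= A.
Hypothesis HB : 0 <= B.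
Hypothesis Hb : forall z, sector al z -> Cmod (f z) <= A * exp (B * Im z).

Let g := g0 a y1 f.
Let ca := cos al.
Definition R1 := (2 * a * Rabs y1 + B) / (a * ca) + 1.

Lemma ca_pos : 0 < ca.
Proof. destruct (trig_facts al al Hal ltac:(lra)) as (_ & H & _). exact H. Qed.

Lemma R1_pos : 1 <= R1.
Proof.
  unfold R1. pose proof ca_pos. pose proof (Rabs_pos y1).
  assert (0 <= (2 * a * Rabs y1 + B) / (a * ca)) by (apply Rmult_le_pos; [nra| apply Rlt_le, Rinv_0_lt_compat; nra]).
  lra.
Qed.

Lemma arc_pt R0 t : R1 <= R0 -> 0 <= t <= al ->
  Cmod (g (phi R0 t) * dphit R0 t)%C <= A * R0 * exp (- (a * ca^2 * R0^2) * t).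
Proof.
  intros HR Ht. pose proof R1_pos. pose proof ca_pos.
  destruct (trig_facts al t Hal Ht) as (Hco & _ & Hs0 & _ & _ & Hs1 & Hc1 & _).
  fold ca in Hco. clearbody ca.
  assert (Hst : t * ca <= sin t).
  { pose proof (sin_ge_tcos t ltac:(lra)). nra. }
  rewrite Cmod_mult, Cmod_dphit, Rabs_right by lra. unfold g. rewrite mod_g0.
  assert (Hf1 : Cmod (f (phi R0 t)) <= A * exp (B * (R0 * sin t))).
  { replace (R0 * sin t) with (Im (phi R0 t)) by (rewrite phi_eq; reflexivity).
    apply Hb. apply phi_sector; lra. }
  assert (HR1 : a * R0 * ca >= 2 * a * Rabs y1 + B).
  { unfold R1 in HR.
    assert ((2 * a * Rabs y1 + B) / (a * ca) <= R0) by lra.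
    apply Rmult_le_compat_r with (r := a * ca) in H1; [|nra].
    field_simplify in H1; nra. }
  assert (Hexp : - a * (2 * (R0 * cos t - y1) * (R0 * sin t)) + B * (R0 * sin t) <= - (a * ca^2 * R0^2) * t).
  { assert (Hy : - y1 <= Rabs y1) by (rewrite <- Rabs_Ropp; apply Rle_abs).
    assert (2 * a * R0 * cos t - 2 * a * y1 - B >= a * R0 * ca).
    { assert (2 * a * R0 * cos t >= 2 * a * R0 * ca) by (apply Rle_ge, Rmult_le_compat_l; nra).
      assert (2 * a * y1 <= 2 * a * Rabs y1) by (apply Rmult_le_compat_l; [lra| apply Rle_abs]). lra. }
    assert (R0 * sin t * (2 * a * R0 * cos t - 2 * a * y1 - B) >= R0 * sin t * (a * R0 * ca))
      by (apply Rle_ge, Rmult_le_compat_l; nra).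
    assert (HR0 : 0 <= R0) by lra.
    assert (0 <= a * R0 * ca) by (apply Rmult_le_pos; [apply Rmult_le_pos|]; lra).
    assert (R0 * (t * ca) <= R0 * sin t) by (apply Rmult_le_compat_l; lra).
    assert (R0 * sin t * (a * R0 * ca) >= R0 * (t * ca) * (a * R0 * ca))
      by (apply Rle_ge, Rmult_le_compat_r; lra).
    replace (- a * (2 * (R0 * cos t - y1) * (R0 * sin t)) + B * (R0 * sin t)) with
      (- (R0 * sin t * (2 * a * R0 * cos t - 2 * a * y1 - B))) by ring.
    replace (- (a * ca ^ 2 * R0 ^ 2) * t) with (- (R0 * (t * ca) * (a * R0 * ca))) by ring.
    lra. }
  assert (E : exp (- a * (2 * (R0 * cos t - y1) * (R0 * sin t))) * exp (B * (R0 * sin t)) <= exp (- (a * ca^2 * R0^2) * t))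
    by (rewrite <- exp_plus; apply exp_le; exact Hexp).
  pose proof (exp_pos (- a * (2 * (R0 * cos t - y1) * (R0 * sin t)))).
  pose proof (Cmod_ge_0 (f (phi R0 t))).
  assert (exp (- a * (2 * (R0 * cos t - y1) * (R0 * sin t))) * Cmod (f (phi R0 t)) <=
          A * exp (- (a * ca^2 * R0^2) * t)).
  { eapply Rle_trans. apply Rmult_le_compat_l. lra. exact Hf1. nra. }
  nra.
Qed.

Lemma arc_bound R0 : R1 <= R0 ->
  Cmod (@RInt C_R_CompleteNormedModule (fun t => g (phi R0 t) * dphit R0 t)%C 0 al) <= A / (a * ca^2 * R0).
Proof.
  intros HR. pose proof R1_pos. pose proof ca_pos.
  set (k := a * ca^2 * R0^2). assert (Hk : 0 < k) by (unfold k; apply Rmult_lt_0_compat; [apply Rmult_lt_0_compat|]; nra).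
  eapply Rle_trans. apply (RInt_C_bound _ (fun t => scal (A * R0) (exp (- k * t))) 0 al (scal (A * R0) ((1 - exp (- k * al)) / k))).
  lra. apply arc_ex. lra. lra. intros; apply (Hc0 a y1 al f Hf); auto.
  intros t Ht. apply arc_pt; auto.
  apply (is_RInt_scal (V := R_NormedModule)). apply int_expk; auto.
  change (scal (A * R0) ((1 - exp (- k * al)) / k)) with (A * R0 * ((1 - exp (- k * al)) / k)).
  pose proof (exp_pos (- k * al)).
  replace (A / (a * ca^2 * R0)) with (A * R0 * (1 / k)) by (unfold k; field; nra).
  apply Rmult_le_compat_l. nra. apply Rmult_le_compat_r. apply Rlt_le, Rinv_0_lt_compat; auto. lra.
Qed.

End PartII.

Lemma real_ext_eq a y1 f b :
  @RInt C_R_CompleteNormedModule (real_integrand a y1 f) 0 b =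
  @RInt C_R_CompleteNormedModule (fun r => g0 a y1 f (RtoC r)) 0 b.
Proof. apply RInt_ext. intros x _. symmetry. apply g0_real. Qed.

Lemma ec_eq al : ec al = cexp ((0:R), al).
Proof. reflexivity. Qed.

Lemma cs_aux (x y z : C) : (x + y)%C = z -> x = (z - y)%C.
Proof. intros H. rewrite <- H. ring. Qed.

Lemma rot_aux (rot arc L e : C) : (rot * e - arc - e * L)%C = ((rot - L) * e + - arc)%C.
Proof. ring. Qed.

Section P2.
Variables (a y1 al : R) (f : C -> C).
Hypothesis Ha : 0 < a.
Hypothesis Hal : 0 < al < PI / 2.
Hypothesis Hf : forall z, sector al z -> ex_derive (K := C_AbsRing) (V := C_NormedModule) f z.

Lemma real_int_ex b : 0 <= b -> @ex_RInt C_R_CompleteNormedModule (real_integrand a y1 f) 0 b.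
Proof.
  intros Hb. apply (ex_RInt_ext (V := C_R_CompleteNormedModule) (fun r => g0 a y1 f (RtoC r))).
  intros x _. apply g0_real.
  apply (real_ex (g0 a y1 f) al). lra. apply (Hd0 a y1 al f Hf). lra. lra.
Qed.

Lemma real_abs_ex b : 0 <= b -> ex_RInt (fun y => Cmod (real_integrand a y1 f y)) 0 b.
Proof.
  intros Hb. apply (ex_RInt_ext (V := R_CompleteNormedModule) (fun y => Cmod (gg (g0 a y1 f) al y 0))).
  intros x Hx. rewrite Rmin_left, Rmax_right in Hx by lra. unfold gg.
  rewrite Rmax0_id, ct_id by lra. rewrite phi_0. rewrite g0_real. reflexivity.
  apply ex_RInt_Cmod. intros z _. apply gg_cont_r. lra. intros; apply (Hc0 a y1 al f Hf); auto.
Qed.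

Lemma real_decomp b : 0 <= b ->
  @RInt C_R_CompleteNormedModule (real_integrand a y1 f) 0 b =
  (@RInt C_R_CompleteNormedModule (fun r => g0 a y1 f (phi r al)) 0 b * ec al
   - @RInt C_R_CompleteNormedModule (fun t => g0 a y1 f (phi b t) * dphit b t)%C 0 al)%C.
Proof.
  intros Hb. rewrite real_ext_eq. apply cs_aux.
  apply (cauchy_sector (g0 a y1 f) al ltac:(lra) (Hd0 a y1 al f Hf) b Hb).
Qed.

Theorem part2 :
  (exists A B : R, 0 <= A /\ 0 <= B /\
       forall z, sector al z -> Cmod (f z) <= A * exp (B * Im z)) ->
     abs_integrable_0_inf (rotated_integrand a y1 al f) /\
     (forall R0 : R, 0 < R0 -> abs_integrable_0_R (real_integrand a y1 f) R0) /\
     exists (L : C) (I : R -> C),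
       is_integral_0_inf (rotated_integrand a y1 al f) L /\
       (forall R0 : R, 0 < R0 -> is_integral_0_R (real_integrand a y1 f) R0 (I R0)) /\
       filterlim I (Rbar_locally p_infty) (locally (Cmult (cexp ((0:R), al)) L)).
Proof.
  intros [A [B [HA [HB Hb]]]].
  assert (Hray : forall y, 0 <= y -> Cmod (f (phi y al)) <= A * exp (B * y)).
  { intros y Hy. eapply Rle_trans. apply Hb. apply phi_sector; lra.
    apply Rmult_le_compat_l; auto. apply exp_le. rewrite phi_eq. simpl.
    destruct (trig_facts al al Hal ltac:(lra)) as (_ & _ & _ & _ & _ & Hs1 & _).
    assert (y * sin al <= y) by nra. nra. }
  destruct (rot_int a y1 al f Ha Hal Hf A B HA HB Hray) as [Habs [L [HL Hlim]]].
  split; [exact Habs|]. split.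
  { intros R0 HR0. unfold abs_integrable_0_R. apply real_abs_ex. lra. }
  exists L, (fun b => @RInt C_R_CompleteNormedModule (real_integrand a y1 f) 0 b).
  split; [exact HL|]. split.
  { intros R0 HR0. unfold is_integral_0_R.
    apply (RInt_correct (V := C_R_CompleteNormedModule)). apply real_int_ex. lra. }
  apply eps_lim. apply (Rbar_locally_filter p_infty).
  intros eps He.
  pose proof (lim_eps _ _ _ _ (Rbar_locally_filter p_infty).(filter_filter) Hlim (eps / 2) ltac:(lra)) as E1.
  pose proof (ca_pos al Hal) as Hca.
  set (M := Rmax (R1 a y1 al B) (2 * A / (a * (cos al)^2 * eps))).
  assert (E2 : Rbar_locally p_infty (fun b => M < b)) by (exists M; auto).
  generalize (filter_and _ _ E1 E2). apply filter_imp. intros b [Hb1 Hb2].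
  assert (HR1 : R1 a y1 al B <= b) by (pose proof (Rmax_l (R1 a y1 al B) (2 * A / (a * (cos al)^2 * eps))); unfold M in Hb2; lra).
  pose proof (R1_pos a y1 al Ha Hal B HB) as HR1p.
  rewrite real_decomp by lra.
  pose proof (arc_bound a y1 al f Ha Hal Hf A B HA HB Hb b HR1) as Harc.
  set (rot := @RInt C_R_CompleteNormedModule (fun r => g0 a y1 f (phi r al)) 0 b) in *.
  set (arc := @RInt C_R_CompleteNormedModule (fun t => g0 a y1 f (phi b t) * dphit b t)%C 0 al) in *.
  rewrite <- ec_eq, rot_aux. eapply Rle_lt_trans. apply Cmod_triangle. rewrite Cmod_opp, Cmod_mult.
  unfold ec. rewrite Cmod_ec, Rmult_1_r.
  assert (A / (a * cos al ^ 2 * b) < eps / 2).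
  { assert (2 * A / (a * (cos al)^2 * eps) < b).
    { pose proof (Rmax_r (R1 a y1 al B) (2 * A / (a * (cos al)^2 * eps))). unfold M in Hb2. lra. }
    assert (0 < a * cos al ^ 2) by (apply Rmult_lt_0_compat; nra).
    apply Rmult_lt_compat_r with (r := a * cos al ^ 2 * eps) in H; [|nra].
    field_simplify in H; [|nra].
    apply Rmult_lt_reg_r with (r := 2 * (a * cos al ^ 2 * b)). nra.
    field_simplify; [|nra]. nra. }
  lra.
Qed.
End P2.

Lemma EE_real e c y : EE ((- e)%R, 0%R) c (RtoC y) = RtoC (exp (- e * (y - c)^2)).
Proof.
  unfold EE, cexp, RtoC, Cmult, Cminus, Cplus, Copp; simpl.
  replace (- e * ((y + - c) * (0 + - 0) + (0 + - 0) * (y + - c)) + 0 * ((y + - c) * (y + - c) - (0 + - 0) * (0 + - 0))) with 0 by ring.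
  rewrite cos_0, sin_0. f_equal. rewrite Rmult_1_r. f_equal. ring. ring.
Qed.

Lemma sq_le_exp t : 0 <= t -> t^2 <= 4 * exp t.
Proof.
  intros Ht. replace (exp t) with (exp (t/2) * exp (t/2)) by (rewrite <- exp_plus; f_equal; field).
  pose proof (exp_ineq1_le (t/2)). nra.
Qed.

Lemma small_lim (x : C) : (forall eta, 0 < eta -> Cmod x <= eta) -> x = RtoC 0.
Proof.
  intros H. apply Cmod_eq_0. pose proof (Cmod_ge_0 x).
  destruct (Req_dec (Cmod x) 0) as [E|E]; auto.
  specialize (H (Cmod x / 2) ltac:(lra)). lra.
Qed.

Section P1.
Variables (a y1 al : R) (f : C -> C).
Hypothesis Ha : 0 < a.
Hypothesis Hal : 0 < al < PI / 2.
Hypothesis Hf : forall z, sector al z -> ex_derive (K := C_AbsRing) (V := C_NormedModule) f z.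
Variables A B : R.
Hypothesis HA : 0 <= A.
Hypothesis HB : 0 <= B.
Hypothesis Hb : forall z, sector al z -> Cmod (f z) <= A * exp (B * Cmod z).
Variable y0 : R.

Definition ge (e : R) (z : C) : C := (EE ((- e)%R, 0%R) y0 z * g0 a y1 f z)%C.

Lemma Hde e r t : 0 <= r -> 0 <= t <= al -> exists l, Cdiff (ge e) (phi r t) l.
Proof.
  intros H1 H2. destruct (Hd0 a y1 al f Hf r t H1 H2) as [l Hl].
  eexists. apply (Cdiff_mult (EE ((- e)%R, 0%R) y0) (g0 a y1 f)). apply Cdiff_EE. exact Hl.
Qed.

Lemma Hce e r t : 0 <= r -> 0 <= t <= al -> Ccont (ge e) (phi r t).
Proof. intros H1 H2. destruct (Hde e r t H1 H2) as [l Hl]. eapply Cdiff_Ccont; eauto. Qed.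

Lemma ge_real e y : ge e (RtoC y) = Cmult (RtoC (exp (- e * (y - y0)^2))) (real_integrand a y1 f y).
Proof. unfold ge. rewrite EE_real, g0_real. reflexivity. Qed.

Lemma Hray : forall y, 0 <= y -> Cmod (f (phi y al)) <= A * exp (B * y).
Proof.
  intros y Hy. eapply Rle_trans. apply Hb. apply phi_sector; lra. rewrite Cmod_phi by lra. lra.
Qed.

Lemma mod_f_real y : 0 <= y -> Cmod (f (RtoC y)) <= A * exp (B * y).
Proof.
  intros Hy. rewrite <- phi_0. eapply Rle_trans. apply Hb. apply phi_sector; lra.
  rewrite Cmod_phi by lra. lra.
Qed.

Lemma Cmod_cexp0 t : Cmod (cexp ((0:R), t)) = 1.
Proof. apply Cmod_ec. Qed.

Lemma real_bound e : 0 < e -> forall y, 0 <= y ->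
  Cmod (ge e (RtoC y)) <= A * exp (- e * y^2 + (2 * e * Rabs y0 + B) * y).
Proof.
  intros He y Hy. unfold ge. rewrite EE_real, g0_real, Cmod_mult, Cmod_R, Rabs_right by (apply Rle_ge, Rlt_le, exp_pos).
  unfold real_integrand. rewrite Cmod_mult, Cmod_cexp0, Rmult_1_l.
  pose proof (mod_f_real y Hy).
  assert (exp (- e * (y - y0)^2) * exp (B * y) <= exp (- e * y^2 + (2 * e * Rabs y0 + B) * y)).
  { rewrite <- exp_plus. apply exp_le.
    assert (y * y0 <= y * Rabs y0) by (apply Rmult_le_compat_l; [lra| apply Rle_abs]).
    assert (0 <= e * y0^2) by (apply Rmult_le_pos; [lra| apply pow2_ge_0]).
    assert (e * (y * y0) <= e * (y * Rabs y0)) by (apply Rmult_le_compat_l; lra).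
    replace (- e * (y - y0)^2 + B * y) with (- e * y^2 + 2 * (e * (y * y0)) - e * y0^2 + B * y) by ring.
    replace ((2 * e * Rabs y0 + B) * y) with (2 * (e * (y * Rabs y0)) + B * y) by ring.
    lra. }
  pose proof (exp_pos (- e * (y - y0)^2)). pose proof (Cmod_ge_0 (f (RtoC y))).
  nra.
Qed.

Lemma mod_EE_ray e y : 0 <= e -> 0 <= y -> Cmod (EE ((- e)%R, 0%R) y0 (phi y al)) <= exp (e * y^2).
Proof.
  intros He Hy. rewrite Cmod_EE. apply exp_le. rewrite phi_eq. simpl.
  pose proof (SIN_bound al).
  assert (0 <= e * (y * cos al - y0)^2) by (apply Rmult_le_pos; [lra| apply pow2_ge_0]).
  assert (e * (y * sin al)^2 <= e * y^2).
  { apply Rmult_le_compat_l. lra. replace ((y * sin al)^2) with (y^2 * (sin al)^2) by ring.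
    assert (sin al ^2 <= 1) by nra. assert (0 <= y^2) by apply pow2_ge_0. nra. }
  replace (- e * ((y * cos al - y0) ^ 2 - (y * sin al) ^ 2) - 0 * (2 * (y * cos al - y0) * (y * sin al)))
    with (- (e * (y * cos al - y0)^2) + e * (y * sin al)^2) by ring.
  lra.
Qed.

Definition Cc := 2 * a * Rabs y1 + B.

Lemma rot_e_bound e : 0 <= e -> e <= cc a al / 2 -> forall y, 0 <= y ->
  Cmod (ge e (phi y al)) <= A * exp (- (cc a al / 2) * y^2 + Cc * y).
Proof.
  intros He He2 y Hy. unfold ge. rewrite Cmod_mult.
  pose proof (mod_EE_ray e y He Hy).
  pose proof (ray_bound a y1 al f Ha Hal A B HA HB Hray y Hy).
  pose proof (Cmod_ge_0 (EE ((- e)%R, 0%R) y0 (phi y al))).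
  pose proof (Cmod_ge_0 (g0 a y1 f (phi y al))).
  assert (exp (e * y^2) * exp (- cc a al * y^2 + (2 * a * Rabs y1 + B) * y) <= exp (- (cc a al / 2) * y^2 + Cc * y)).
  { rewrite <- exp_plus. apply exp_le. unfold Cc. assert (0 <= y^2) by apply pow2_ge_0.
    assert (e * y^2 <= cc a al / 2 * y^2) by (apply Rmult_le_compat_r; lra). lra. }
  pose proof (exp_pos (e * y^2)).
  pose proof (exp_pos (- cc a al * y^2 + (2 * a * Rabs y1 + B) * y)).
  assert (Cmod (EE ((- e)%R, 0%R) y0 (phi y al)) * Cmod (g0 a y1 f (phi y al)) <=
          exp (e * y^2) * (A * exp (- cc a al * y^2 + (2 * a * Rabs y1 + B) * y))).
  { apply Rmult_le_compat; auto. }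
  nra.
Qed.

Lemma diff_bound e : 0 < e -> e <= 1 -> e <= cc a al / 8 -> forall y, 0 <= y ->
  Cmod (ge e (phi y al) - g0 a y1 f (phi y al))%C <=
  e * (8 * A * exp (Rabs y0 + 2 * y0^2) * exp ((Cc + 2)^2 / (4 * (3 * cc a al / 4)))) * exp (- y).
Proof.
  intros He He1 He2 y Hy. pose proof (cc_pos a al Ha Hal) as Hcc.
  set (w := phi y al).
  set (u := (((- e)%R, 0%R) * ((w - RtoC y0) * (w - RtoC y0)))%C).
  replace (ge e w - g0 a y1 f w)%C with ((cexp u - 1) * g0 a y1 f w)%C by (unfold ge, EE; fold u; ring).
  rewrite Cmod_mult.
  set (q := (y + Rabs y0)^2).
  assert (Hq0 : 0 <= q) by apply pow2_ge_0.
  assert (Hu : Cmod u <= e * q).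
  { unfold u. rewrite !Cmod_mult.
    replace (Cmod ((- e)%R, 0%R)) with e.
    2:{ unfold Cmod; simpl. replace (- e * (- e * 1) + 0 * (0 * 1)) with (e^2) by ring. rewrite sqrt_pow2; lra. }
    assert (Cmod (w - RtoC y0) <= y + Rabs y0).
    { eapply Rle_trans. unfold Cminus. apply Cmod_triangle. rewrite Cmod_opp, Cmod_R.
      unfold w. rewrite Cmod_phi by lra. lra. }
    pose proof (Cmod_ge_0 (w - RtoC y0)). unfold q.
    assert (Cmod (w - RtoC y0) * Cmod (w - RtoC y0) <= (y + Rabs y0)^2) by nra.
    apply Rmult_le_compat_l; lra. }
  assert (Hcu : Cmod (cexp u - 1) <= 2 * (e * q) * exp (e * q)).
  { eapply Rle_trans. apply cexp_m1. pose proof (Cmod_ge_0 u).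
    apply Rmult_le_compat. nra. apply Rlt_le, exp_pos. lra. apply exp_le; lra. }
  assert (Heq : e * q <= cc a al / 4 * y^2 + 2 * y0^2).
  { unfold q. assert ((y + Rabs y0)^2 <= 2 * y^2 + 2 * y0^2).
    { rewrite <- (pow2_abs y0). pose proof (pow2_ge_0 (y - Rabs y0)). nra. }
    assert (0 <= y^2) by apply pow2_ge_0. assert (0 <= y0^2) by apply pow2_ge_0.
    nra. }
  assert (Hq4 : q <= 4 * exp (y + Rabs y0)) by (apply sq_le_exp; pose proof (Rabs_pos y0); lra).
  pose proof (ray_bound a y1 al f Ha Hal A B HA HB Hray y Hy) as Hg. fold w in Hg. fold Cc in Hg.
  set (G := exp (- cc a al * y^2 + Cc * y)) in *.
  assert (Hstep : Cmod (cexp u - 1) * Cmod (g0 a y1 f w) <=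
     2 * e * (4 * exp (y + Rabs y0)) * exp (cc a al / 4 * y^2 + 2 * y0^2) * (A * G)).
  { apply Rmult_le_compat. apply Cmod_ge_0. apply Cmod_ge_0. 2: exact Hg.
    eapply Rle_trans. exact Hcu.
    pose proof (exp_pos (e * q)).
    assert (exp (e * q) <= exp (cc a al / 4 * y^2 + 2 * y0^2)) by (apply exp_le; lra).
    apply Rmult_le_compat. nra. lra. nra. lra. }
  eapply Rle_trans. exact Hstep.
  pose proof (gauss (3 * cc a al / 4) (Cc + 1) y ltac:(lra)) as Hga.
  replace (Cc + 1 + 1) with (Cc + 2) in Hga by ring.
  assert (E : exp (y + Rabs y0) * exp (cc a al / 4 * y^2 + 2 * y0^2) * G =
              exp (Rabs y0 + 2 * y0^2) * exp (- (3 * cc a al / 4) * y^2 + (Cc + 1) * y)).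
  { unfold G. rewrite <- !exp_plus. f_equal. lra. }
  replace (2 * e * (4 * exp (y + Rabs y0)) * exp (cc a al / 4 * y ^ 2 + 2 * y0 ^ 2) * (A * G))
    with (8 * e * A * (exp (y + Rabs y0) * exp (cc a al / 4 * y^2 + 2 * y0^2) * G)) by ring.
  rewrite E.
  pose proof (exp_pos (Rabs y0 + 2 * y0^2)).
  assert (0 <= 8 * e * A) by nra.
  assert (8 * e * A * (exp (Rabs y0 + 2 * y0 ^ 2) * exp (- (3 * cc a al / 4) * y ^ 2 + (Cc + 1) * y)) <=
          8 * e * A * (exp (Rabs y0 + 2 * y0 ^ 2) * (exp ((Cc + 2) ^ 2 / (4 * (3 * cc a al / 4))) * exp (- y)))).
  { apply Rmult_le_compat_l; auto. apply Rmult_le_compat_l. lra. exact Hga. }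
  eapply Rle_trans. exact H1. right. ring.
Qed.

Definition Ca := 2 * Rabs y0 + 2 * a * Rabs y1 + B.

Lemma arc_pt_e e b t : 0 < e -> e <= 1 -> e <= a * cos al -> 0 <= b -> 0 <= t <= al ->
  Cmod (ge e (phi b t) * dphit b t)%C <= A * exp (- e * b^2 + (Ca + 1) * b).
Proof.
  intros He He1 He2 Hb0 Ht.
  destruct (trig_facts al t Hal Ht) as (Hco & Hca & Hs0 & _ & _ & Hs1 & Hc1 & Hsc).
  pose proof (COS_bound t) as Hcb.
  rewrite Cmod_mult, Cmod_dphit, Rabs_right by lra. unfold ge. rewrite Cmod_mult, mod_g0, Cmod_EE.
  rewrite phi_eq. simpl. rewrite <- phi_eq.
  assert (Hf1 : Cmod (f (phi b t)) <= A * exp (B * b)).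
  { eapply Rle_trans. apply Hb. apply phi_sector; lra. rewrite Cmod_phi by lra. lra. }
  set (X := - e * ((b * cos t - y0) ^ 2 - (b * sin t) ^ 2) - 0 * (2 * (b * cos t - y0) * (b * sin t))).
  set (Y := - a * (2 * (b * cos t - y1) * (b * sin t))).
  assert (HXY : X + Y + B * b <= - e * b^2 + Ca * b).
  { unfold X, Y, Ca.
    assert (H1 : 2 * b^2 * sin t * (e * sin t - a * cos t) <= 0).
    { assert (e * sin t <= a * cos t).
      { assert (e * sin t <= e) by nra. assert (a * cos al <= a * cos t) by (apply Rmult_le_compat_l; lra). lra. }
      assert (0 <= 2 * b^2 * sin t) by (assert (0 <= b^2) by apply pow2_ge_0; nra). nra. }
    assert (H2 : b * cos t * y0 <= b * Rabs y0).
    { assert (cos t * y0 <= Rabs y0).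
      { eapply Rle_trans. apply Rle_abs. rewrite Rabs_mult. pose proof (Rabs_pos y0).
        assert (Rabs (cos t) <= 1) by (apply Rabs_le; lra). nra. }
      replace (b * cos t * y0) with (b * (cos t * y0)) by ring. apply Rmult_le_compat_l; lra. }
    assert (H3 : b * sin t * y1 <= b * Rabs y1).
    { assert (sin t * y1 <= Rabs y1).
      { eapply Rle_trans. apply Rle_abs. rewrite Rabs_mult. pose proof (Rabs_pos y1).
        assert (Rabs (sin t) <= 1) by (apply Rabs_le; lra). nra. }
      replace (b * sin t * y1) with (b * (sin t * y1)) by ring. apply Rmult_le_compat_l; lra. }
    assert (H4 : e * (b * cos t * y0) <= e * (b * Rabs y0)) by (apply Rmult_le_compat_l; lra).
    assert (H5 : a * (b * sin t * y1) <= a * (b * Rabs y1)) by (apply Rmult_le_compat_l; lra).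
    assert (H6 : e * (b * Rabs y0) <= b * Rabs y0).
    { assert (0 <= b * Rabs y0) by (apply Rmult_le_pos; [lra|apply Rabs_pos]). nra. }
    assert (H7 : 0 <= e * y0^2) by (apply Rmult_le_pos; [lra|apply pow2_ge_0]).
    assert (Hcos2 : cos t ^ 2 = 1 - sin t ^ 2) by lra.
    replace (- e * ((b * cos t - y0) ^ 2 - (b * sin t) ^ 2) - 0 * (2 * (b * cos t - y0) * (b * sin t)) +
       - a * (2 * (b * cos t - y1) * (b * sin t)) + B * b) with
      (- e * b^2 * cos t ^ 2 + 2 * (e * (b * cos t * y0)) - e * y0^2 + e * b^2 * sin t ^ 2
       - 2 * a * b^2 * sin t * cos t + 2 * (a * (b * sin t * y1)) + B * b) by ring.
    rewrite Hcos2.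
    replace (- e * b ^ 2 * (1 - sin t ^ 2) + 2 * (e * (b * cos t * y0)) - e * y0 ^ 2 + e * b ^ 2 * sin t ^ 2 -
       2 * a * b ^ 2 * sin t * cos t + 2 * (a * (b * sin t * y1)) + B * b) with
      (- e * b^2 + 2 * b^2 * sin t * (e * sin t - a * cos t) + 2 * (e * (b * cos t * y0)) - e * y0^2
       + 2 * (a * (b * sin t * y1)) + B * b) by ring.
    lra. }
  pose proof (exp_pos X). pose proof (exp_pos Y). pose proof (Cmod_ge_0 (f (phi b t))).
  assert (Hbb : b <= exp b) by (pose proof (exp_ineq1_le b); lra).
  assert (exp X * (exp Y * Cmod (f (phi b t))) <= A * exp (- e * b^2 + Ca * b)).
  { replace (exp X * (exp Y * Cmod (f (phi b t)))) with ((exp X * exp Y) * Cmod (f (phi b t))) by ring.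
    eapply Rle_trans. apply Rmult_le_compat_l. nra. exact Hf1.
    replace (exp X * exp Y * (A * exp (B * b))) with (A * exp (X + Y + B * b)) by (rewrite !exp_plus; ring).
    apply Rmult_le_compat_l. auto. apply exp_le. lra. }
  replace (exp (- e * b ^ 2 + (Ca + 1) * b)) with (exp (- e * b^2 + Ca * b) * exp b) by (rewrite <- exp_plus; f_equal; ring).
  pose proof (exp_pos (- e * b^2 + Ca * b)).
  assert (HP : 0 <= exp X * (exp Y * Cmod (f (phi b t)))).
  { apply Rmult_le_pos. lra. apply Rmult_le_pos; lra. }
  eapply Rle_trans. apply Rmult_le_compat. exact HP. exact Hb0. exact H2. exact Hbb.
  right. rewrite Rmult_assoc, <- exp_plus. f_equal. f_equal. ring.
Qed.

Definition realE (e : R) (y : R) : C :=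
  Cmult (RtoC (exp (- e * (y - y0)^2))) (real_integrand a y1 f y).

Lemma real_int e : 0 < e ->
  abs_integrable_0_inf (realE e) /\ exists Le, is_integral_0_inf (realE e) Le /\
    filterlim (fun b => @RInt C_R_CompleteNormedModule (realE e) 0 b) (Rbar_locally p_infty) (locally Le).
Proof.
  intros He.
  apply (int_C (realE e) (fun y => gg (ge e) al y 0) (A * exp ((2 * e * Rabs y0 + B + 1)^2 / (4 * e)))).
  - intros x. apply gg_cont_r. lra. intros; apply Hce; auto.
  - intros x Hx. unfold gg. rewrite Rmax0_id, ct_id by lra. rewrite phi_0. apply ge_real.
  - intros y Hy. unfold realE. rewrite <- ge_real.
    pose proof (real_bound e He y Hy) as H1.
    pose proof (gauss e (2 * e * Rabs y0 + B) y He) as H2.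
    eapply Rle_trans. exact H1. rewrite (Rmult_assoc A). apply Rmult_le_compat_l. auto. exact H2.
Qed.

Lemma rot_e_int e : 0 <= e -> e <= cc a al / 2 ->
  exists Je, filterlim (fun b => @RInt C_R_CompleteNormedModule (fun y => ge e (phi y al)) 0 b)
     (Rbar_locally p_infty) (locally Je).
Proof.
  intros He He2. pose proof (cc_pos a al Ha Hal) as Hcc.
  destruct (int_C (fun y => ge e (phi y al)) (fun y => gg (ge e) al y al) (A * exp ((Cc + 1)^2 / (4 * (cc a al / 2)))))
    as [_ [Je [_ HJ]]].
  - intros x. apply gg_cont_r. lra. intros; apply Hce; auto.
  - intros x Hx. unfold gg. rewrite Rmax0_id, ct_id by lra. reflexivity.
  - intros y Hy. pose proof (rot_e_bound e He He2 y Hy) as H1.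
    pose proof (gauss (cc a al / 2) Cc y ltac:(lra)) as H2.
    eapply Rle_trans. exact H1. rewrite (Rmult_assoc A). apply Rmult_le_compat_l. auto.
    replace (- (cc a al / 2) * y ^ 2) with (- (cc a al / 2) * y ^ 2) by reflexivity. exact H2.
  - exists Je. exact HJ.
Qed.

Lemma ray_ex_e e u v : 0 <= u -> 0 <= v -> @ex_RInt C_R_CompleteNormedModule (fun y => ge e (phi y al)) u v.
Proof.
  intros Hu Hv. apply (ex_RInt_clamp _ (fun y => gg (ge e) al y al)); auto.
  intros x. apply gg_cont_r. lra. intros; apply Hce; auto.
  intros x Hx. unfold gg. rewrite Rmax0_id, ct_id by lra. reflexivity.
Qed.

Lemma ray_ex_0 u v : 0 <= u -> 0 <= v -> @ex_RInt C_R_CompleteNormedModule (fun y => g0 a y1 f (phi y al)) u v.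
Proof.
  intros Hu Hv. apply (ex_RInt_clamp _ (fun y => gg (g0 a y1 f) al y al)); auto.
  intros x. apply gg_cont_r. lra. intros; apply (Hc0 a y1 al f Hf); auto.
  intros x Hx. unfold gg. rewrite Rmax0_id, ct_id by lra. reflexivity.
Qed.

Lemma lim3 (f1 f2 : R -> C) l1 l2 K :
  filterlim f1 (Rbar_locally p_infty) (locally l1) ->
  filterlim f2 (Rbar_locally p_infty) (locally l2) ->
  Rbar_locally p_infty (fun b => Cmod (f1 b - f2 b) <= K) ->
  Cmod (l1 - l2) <= K.
Proof.
  intros H1 H2 H3.
  apply Rnot_lt_le. intros Hc.
  set (eta := (Cmod (l1 - l2) - K) / 2).
  assert (Heta : 0 < eta) by (unfold eta; lra).
  pose proof (lim_eps _ _ _ _ (Rbar_locally_filter p_infty).(filter_filter) H1 eta Heta) as E1.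
  pose proof (lim_eps _ _ _ _ (Rbar_locally_filter p_infty).(filter_filter) H2 eta Heta) as E2.
  destruct (filter_ex (F := Rbar_locally p_infty) _ (filter_and _ _ E1 (filter_and _ _ E2 H3))) as [b [B1 [B2 B3]]].
  assert (Cmod (l1 - l2) <= Cmod (f1 b - l1) + Cmod (f1 b - f2 b) + Cmod (f2 b - l2)).
  { replace (l1 - l2)%C with (- (f1 b - l1) + (f1 b - f2 b) + (f2 b - l2))%C by ring.
    eapply Rle_trans. apply Cmod_triangle. eapply Rle_trans. apply Rplus_le_compat_r. apply Cmod_triangle.
    rewrite Cmod_opp. lra. }
  unfold eta in *. lra.
Qed.

Definition Md := 8 * A * exp (Rabs y0 + 2 * y0^2) * exp ((Cc + 2)^2 / (4 * (3 * cc a al / 4))).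

Lemma J_close e (L Je : C) : 0 < e -> e <= 1 -> e <= cc a al / 8 ->
  filterlim (fun b => @RInt C_R_CompleteNormedModule (fun y => g0 a y1 f (phi y al)) 0 b) (Rbar_locally p_infty) (locally L) ->
  filterlim (fun b => @RInt C_R_CompleteNormedModule (fun y => ge e (phi y al)) 0 b) (Rbar_locally p_infty) (locally Je) ->
  Cmod (Je - L) <= e * Md.
Proof.
  intros He He1 He2 HL HJ. apply (lim3 _ _ _ _ _ HJ HL). exists 0. intros b Hb'.
  assert (Ex : @ex_RInt C_R_CompleteNormedModule (fun y => (ge e (phi y al) - g0 a y1 f (phi y al))%C) 0 b).
  { apply (ex_RInt_minus (V := C_R_CompleteNormedModule)). apply ray_ex_e; lra. apply ray_ex_0; lra. }
  assert (E : (@RInt C_R_CompleteNormedModule (fun y => ge e (phi y al)) 0 b -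
               @RInt C_R_CompleteNormedModule (fun y => g0 a y1 f (phi y al)) 0 b)%C =
              @RInt C_R_CompleteNormedModule (fun y => (ge e (phi y al) - g0 a y1 f (phi y al))%C) 0 b).
  { symmetry. apply (is_RInt_unique (V := C_R_CompleteNormedModule)).
    apply (is_RInt_minus (V := C_R_NormedModule)); apply (RInt_correct (V := C_R_CompleteNormedModule)).
    apply ray_ex_e; lra. apply ray_ex_0; lra. }
  rewrite E, Cmod_norm.
  replace (e * Md) with (e * Md * exp (- 0)) by (rewrite Ropp_0, exp_0; ring).
  apply (int_expm_bound (V := C_R_CompleteNormedModule)). lra. exact Ex.
  intros y Hy. rewrite <- Cmod_norm. unfold Md.
  apply diff_bound; auto; lra.
Qed.

Definition arcE e b : C := @RInt C_R_CompleteNormedModule (fun t => ge e (phi b t) * dphit b t)%C 0 al.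

Lemma arc_small e : 0 < e -> e <= 1 -> e <= a * cos al -> forall eta, 0 < eta ->
  Rbar_locally p_infty (fun b => Cmod (arcE e b) < eta).
Proof.
  intros He He1 He2 eta Heta.
  set (K := exp ((Ca + 1 + 1)^2 / (4 * e))).
  destruct (exp_small (al * A * K) eta Heta) as [N [HN HNe]].
  exists N. intros b Hbn.
  assert (Hbd : Cmod (arcE e b) <= al * (A * exp (- e * b^2 + (Ca + 1) * b))).
  { unfold arcE. eapply Rle_trans.
    apply (RInt_C_bound _ (fun _ => A * exp (- e * b^2 + (Ca + 1) * b)) 0 al (scal (al - 0) (A * exp (- e * b^2 + (Ca + 1) * b)))).
    lra. apply arc_ex. lra. lra. intros; apply Hce; auto.
    intros t Ht. apply arc_pt_e; auto; lra.
    apply (is_RInt_const (V := R_NormedModule)). right. change (scal (al - 0) (A * exp (- e * b ^ 2 + (Ca + 1) * b))) with ((al - 0) * (A * exp (- e * b ^ 2 + (Ca + 1) * b))). ring. }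
  pose proof (gauss e (Ca + 1) b He) as Hg. fold K in Hg.
  assert (exp (- b) <= exp (- N)) by (apply exp_le; lra).
  pose proof (exp_pos (- b)). pose proof (exp_pos ((Ca + 1 + 1)^2 / (4 * e))). fold K in H1.
  assert (0 <= al * A) by (apply Rmult_le_pos; lra).
  assert (al * (A * exp (- e * b^2 + (Ca + 1) * b)) <= al * A * K * exp (- b)).
  { replace (al * A * K * exp (- b)) with (al * A * (K * exp (- b))) by ring.
    rewrite <- Rmult_assoc. apply Rmult_le_compat_l; auto. }
  assert (al * A * K * exp (- b) <= al * A * K * exp (- N)).
  { apply Rmult_le_compat_l; auto. apply Rmult_le_pos; lra. }
  lra.
Qed.

Lemma alg3 (Le realR rot Je arc e : C) : realR = (rot * e - arc)%C ->
  (Le - Je * e)%C = (- (realR - Le) + (rot - Je) * e + - arc)%C.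
Proof. intros H. rewrite H. ring. Qed.

Lemma I_eq e (Le Je : C) : 0 < e -> e <= 1 -> e <= cc a al / 8 -> e <= a * cos al ->
  filterlim (fun b => @RInt C_R_CompleteNormedModule (realE e) 0 b) (Rbar_locally p_infty) (locally Le) ->
  filterlim (fun b => @RInt C_R_CompleteNormedModule (fun y => ge e (phi y al)) 0 b) (Rbar_locally p_infty) (locally Je) ->
  Le = (Je * ec al)%C.
Proof.
  intros He He1 He2 He3 HL HJ.
  assert (Z : (Le - Je * ec al)%C = RtoC 0).
  { apply small_lim. intros eta Heta.
    pose proof (lim_eps _ _ _ _ (Rbar_locally_filter p_infty).(filter_filter) HL (eta/3) ltac:(lra)) as E1.
    pose proof (lim_eps _ _ _ _ (Rbar_locally_filter p_infty).(filter_filter) HJ (eta/3) ltac:(lra)) as E2.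
    pose proof (arc_small e He He1 He3 (eta/3) ltac:(lra)) as E3.
    assert (E4 : Rbar_locally p_infty (fun b => 0 < b)) by (exists 0; auto).
    destruct (filter_ex (F := Rbar_locally p_infty) _ (filter_and _ _ E1 (filter_and _ _ E2 (filter_and _ _ E3 E4)))) as [b [B1 [B2 [B3 B4]]]].
    assert (Hdec : @RInt C_R_CompleteNormedModule (realE e) 0 b =
       (@RInt C_R_CompleteNormedModule (fun y => ge e (phi y al)) 0 b * ec al - arcE e b)%C).
    { unfold arcE. rewrite (RInt_ext (V := C_R_CompleteNormedModule) (realE e) (fun r => ge e (RtoC r))).
      2:{ intros x _. unfold realE. symmetry. apply ge_real. }
      apply cs_aux. apply (cauchy_sector (ge e) al ltac:(lra) (Hde e) b ltac:(lra)). }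
    rewrite (alg3 _ _ _ _ _ _ Hdec).
    eapply Rle_trans. apply Cmod_triangle. eapply Rle_trans. apply Rplus_le_compat_r. apply Cmod_triangle.
    rewrite !Cmod_opp, Cmod_mult. unfold ec. rewrite Cmod_ec, Rmult_1_r. lra. }
  replace Le with ((Le - Je * ec al) + Je * ec al)%C by ring. rewrite Z. ring.
Qed.

Lemma Md_ge0 : 0 <= Md.
Proof.
  unfold Md. pose proof (exp_pos (Rabs y0 + 2 * y0^2)).
  pose proof (exp_pos ((Cc + 2)^2 / (4 * (3 * cc a al / 4)))).
  apply Rmult_le_pos; [apply Rmult_le_pos; [apply Rmult_le_pos|]|]; lra.
Qed.

Theorem part1 :
     abs_integrable_0_inf (rotated_integrand a y1 al f) /\
     (forall eps : R, 0 < eps ->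
        abs_integrable_0_inf
          (fun y => Cmult (RtoC (exp (- eps * (y - y0)^2))) (real_integrand a y1 f y))) /\
     exists (L : C) (I : R -> C),
       is_integral_0_inf (rotated_integrand a y1 al f) L /\
       (forall eps : R, 0 < eps ->
          is_integral_0_inf
            (fun y => Cmult (RtoC (exp (- eps * (y - y0)^2))) (real_integrand a y1 f y))
            (I eps)) /\
       filterlim I (at_right 0) (locally (Cmult (cexp ((0:R), al)) L)).
Proof.
  destruct (rot_int a y1 al f Ha Hal Hf A B HA HB Hray) as [Habs [L [HL Hlim]]].
  split; [exact Habs|]. split.
  { intros e He. apply (real_int e He). }
  exists L, (fun e => @RInt_gen C_R_CompleteNormedModule (realE e) (at_point 0) (Rbar_locally p_infty)).
  assert (Hval : forall e, 0 < e -> forall Le, is_integral_0_inf (realE e) Le ->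
     @RInt_gen C_R_CompleteNormedModule (realE e) (at_point 0) (Rbar_locally p_infty) = Le).
  { intros e He Le HLe. apply is_RInt_gen_unique. exact HLe. }
  split; [exact HL|]. split.
  { intros e He. destruct (real_int e He) as [_ [Le [HLe _]]].
    rewrite (Hval e He Le HLe). exact HLe. }
  pose proof (cc_pos a al Ha Hal) as Hcc.
  destruct (trig_facts al al Hal ltac:(lra)) as (_ & Hca & _).
  pose proof Md_ge0 as HMd.
  apply eps_lim. apply within_filter, locally_filter.
  intros eta Heta.
  set (d := Rmin (Rmin 1 (cc a al / 8)) (Rmin (a * cos al) (eta / (Md + 1)))).
  assert (Hd : 0 < d).
  { unfold d. repeat apply Rmin_pos; try lra. apply Rmult_lt_0_compat; lra. apply Rdiv_lt_0_compat; lra. }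
  exists (mkposreal d Hd). intros e He_ball He.
  assert (Hed : e < d).
  { change (Rabs (e - 0) < d) in He_ball. rewrite Rminus_0_r, Rabs_right in He_ball by lra. exact He_ball. }
  assert (Hd1 : d <= 1) by (unfold d; eapply Rle_trans; apply Rmin_l).
  assert (Hd2 : d <= cc a al / 8) by (unfold d; eapply Rle_trans; [apply Rmin_l| apply Rmin_r]).
  assert (Hd3 : d <= a * cos al) by (unfold d; eapply Rle_trans; [apply Rmin_r| apply Rmin_l]).
  assert (Hd4 : d <= eta / (Md + 1)) by (unfold d; eapply Rle_trans; [apply Rmin_r| apply Rmin_r]).
  destruct (real_int e He) as [_ [Le [HLe HLlim]]].
  destruct (rot_e_int e ltac:(lra) ltac:(lra)) as [Je HJ].
  rewrite (Hval e He Le HLe).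
  rewrite (I_eq e Le Je He ltac:(lra) ltac:(lra) ltac:(lra) HLlim HJ).
  pose proof (J_close e L Je He ltac:(lra) ltac:(lra) Hlim HJ) as Hc.
  replace (Je * ec al - cexp (0, al) * L)%C with ((Je - L) * ec al)%C by (unfold ec; ring).
  rewrite Cmod_mult. unfold ec. rewrite Cmod_ec, Rmult_1_r.
  assert (e * Md < eta).
  { assert (e < eta / (Md + 1)) by lra.
    apply Rmult_lt_compat_r with (r := Md + 1) in H; [|lra].
    field_simplify in H; [|lra]. nra. }
  lra.
Qed.
End P1.

Theorem corollary2p2 (a y1 alpha : R) (Omega : C -> Prop) (f : C -> C) :
  0 < a -> 0 < alpha < PI / 2 ->
  open Omega -> (forall z, sector alpha z -> Omega z) ->
  holomorphic_on Omega f ->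
  (* (i) *)
  ((exists A B : R, 0 <= A /\ 0 <= B /\
       forall z, sector alpha z -> Cmod (f z) <= A * exp (B * Cmod z)) ->
   forall y0 : R,
     abs_integrable_0_inf (rotated_integrand a y1 alpha f) /\
     (forall eps : R, 0 < eps ->
        abs_integrable_0_inf
          (fun y => Cmult (RtoC (exp (- eps * (y - y0)^2))) (real_integrand a y1 f y))) /\
     exists (L : C) (I : R -> C),
       is_integral_0_inf (rotated_integrand a y1 alpha f) L /\
       (forall eps : R, 0 < eps ->
          is_integral_0_inf
            (fun y => Cmult (RtoC (exp (- eps * (y - y0)^2))) (real_integrand a y1 f y))
            (I eps)) /\
       filterlim I (at_right 0) (locally (Cmult (cexp ((0:R), alpha)) L)))
  /\
  (* (ii) *)
  ((exists A B : R, 0 <= A /\ 0 <= B /\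
       forall z, sector alpha z -> Cmod (f z) <= A * exp (B * Im z)) ->
     abs_integrable_0_inf (rotated_integrand a y1 alpha f) /\
     (forall R0 : R, 0 < R0 -> abs_integrable_0_R (real_integrand a y1 f) R0) /\
     exists (L : C) (I : R -> C),
       is_integral_0_inf (rotated_integrand a y1 alpha f) L /\
       (forall R0 : R, 0 < R0 -> is_integral_0_R (real_integrand a y1 f) R0 (I R0)) /\
       filterlim I (Rbar_locally p_infty) (locally (Cmult (cexp ((0:R), alpha)) L))).

Proof.
  intros Ha Hal HO Hsub Hhol.
  assert (Hf : forall z, sector alpha z -> ex_derive (K := C_AbsRing) (V := C_NormedModule) f z)
    by (intros z Hz; apply Hhol; apply Hsub; exact Hz).
  split.
  - intros [A [B [HA [HB Hb]]]] y0. exact (part1 a y1 alpha f Ha Hal Hf A B HA HB Hb y0).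
  - exact (part2 a y1 alpha f Ha Hal Hf).
Qed.
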